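(* Assume $f$ is sufficiently smooth (e.g. $f$ has continuous, bounded partial derivatives up to order four on $[a,b]\times\mathbb{R}$, so that the exact solution $y$ is sufficiently smooth and $f$ is Lipschitz in $y$). Let $w_i$ be produced by the RK3GL2 method with parameter $h=(b-a)/(3N)$ and $w_0=y(a)$. Then the global error at the Gauss–Legendre block endpoints satisfies $$\Delta_{3N}=w_{3N}-y(b)=O(h^4)\qquad (h\to 0),$$ i.e. RK3GL2 has global order four, one higher than the global order three of the underlying RK3 method.
   Context: Scalar initial value problem $y'=f(x,y)$, $y(a)=y_0$, $a\le x\le b$. RK3 denotes the explicit third-order Runge–Kutta method $w\mapsto w+\eta F(x,w)$ with step $\eta$, where $\eta F(x,w)=\frac29k_1+\frac39k_2+\frac49k_3$, $k_1=\eta f(x,w)$, $k_2=\eta f(x+\eta/2,\,w+k_1/2)$, $k_3=\eta f(x+3\eta/4,\,w+3k_2/4)$. RK3GL2 method with parameter $h>0$: the interval $[a,b]$ is divided into $N$ equal subintervals $[x_{3k},x_{3k+3}]$ of length $3h$ (so $x_{3k}=a+3kh$ and $3Nh=b-a$). Inside $[x_{3k},x_{3k+3}]$ the two Gauss–Legendre nodes are $x_{3k+1}=x_{3k}+\frac{3h}{2}(1-\frac{1}{\sqrt3})$ and $x_{3k+2}=x_{3k}+\frac{3h}{2}(1+\frac{1}{\sqrt3})$. Set $h_i=x_{i+1}-x_i$. The iteration is: $w_{3k+1}=w_{3k}+h_{3k}F(x_{3k},w_{3k})$, $w_{3k+2}=w_{3k+1}+h_{3k+1}F(x_{3k+1},w_{3k+1})$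 (RK3 steps, with step $h_i$), and $w_{3k+3}=w_{3k}+\frac{3h}{2}\big[f(x_{3k+1},w_{3k+1})+f(x_{3k+2},w_{3k+2})\big]$ (two-point Gauss–Legendre step). The global error is $\Delta_i=w_i-y(x_i)$. *)

(* Defs.v *)
From Stdlib Require Import Reals Lra Lia.
From Coquelicot Require Import Coquelicot.
Open Scope R_scope.

Definition rk3_step (f : R -> R -> R) (x w eta : R) : R :=
  let k1 := eta * f x w in
  let k2 := eta * f (x + eta / 2) (w + k1 / 2) in
  let k3 := eta * f (x + 3 * eta / 4) (w + 3 * k2 / 4) in
  w + (2/9) * k1 + (3/9) * k2 + (4/9) * k3.

Definition gl_node1 (x0 h : R) : R := x0 + (3 * h / 2) * (1 - 1 / sqrt 3).
Definition gl_node2 (x0 h : R) : R := x0 + (3 * h / 2) * (1 + 1 / sqrt 3).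

(* One RK3GL2 block: from w_{3k} at x_{3k} = x0 to w_{3k+3}. *)
Definition rk3gl2_block (f : R -> R -> R) (x0 h w0 : R) : R :=
  let x1 := gl_node1 x0 h in
  let x2 := gl_node2 x0 h in
  let w1 := rk3_step f x0 w0 (x1 - x0) in
  let w2 := rk3_step f x1 w1 (x2 - x1) in
  w0 + (3 * h / 2) * (f x1 w1 + f x2 w2).

(* rk3gl2_w f a h w0 k = w_{3k}, with x_{3k} = a + 3 k h. *)
Fixpoint rk3gl2_w (f : R -> R -> R) (a h w0 : R) (k : nat) : R :=
  match k with
  | O => w0
  | S k' => rk3gl2_block f (a + 3 * INR k' * h) h (rk3gl2_w f a h w0 k')
  end.

(* f has continuous, bounded partial derivatives up to order four on
   [a,b] x R.  D i j x y stands for d^i/dx^i d^j/dy^j f (x,y). *)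
Definition smooth4_bounded (a b : R) (f : R -> R -> R) : Prop :=
  exists D : nat -> nat -> R -> R -> R,
    (forall x y, D O O x y = f x y) /\
    (forall i j x y, (i + j < 4)%nat -> a <= x <= b ->
        is_derive (fun t => D i j t y) x (D (S i) j x y) /\
        is_derive (fun t => D i j x t) y (D i (S j) x y)) /\
    (forall i j x y, (i + j <= 4)%nat -> a <= x <= b ->
        continuous (fun p : R * R => D i j (fst p) (snd p)) (x, y)) /\
    (exists M, forall i j x y, (i + j <= 4)%nat -> a <= x <= b ->
        Rabs (D i j x y) <= M).

(* Main.v *)
Require Import Defs.
From Stdlib Require Import Reals Lra Lia Factorial.
From Coquelicot Require Import Coquelicot.
Open Scope R_scope.

Lemma is_derive_cont (g : R -> R) x l : is_derive g x l -> continuity_pt g x.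
Proof.
  intros H. apply continuity_pt_filterlim. apply (ex_derive_continuous (V:=R_NormedModule)). exists l. exact H.
Qed.

Lemma mvt_bound (g dg : R -> R) (x0 s c : R) (n : nat) :
  0 <= c ->
  (forall t, Rmin x0 (x0+s) <= t <= Rmax x0 (x0+s) -> is_derive g t (dg t)) ->
  (forall t, Rmin x0 (x0+s) <= t <= Rmax x0 (x0+s) -> Rabs (dg t) <= c * Rabs (t - x0) ^ n) ->
  Rabs (g (x0+s) - g x0) <= c * Rabs s ^ (S n).
Proof.
  intros Hc Hd Hb.
  destruct (MVT_gen g x0 (x0+s) dg) as [xi [Hxi Heq]].
  - intros t Ht. apply Hd. lra.
  - intros t Ht. apply is_derive_cont with (dg t). apply Hd. exact Ht.
  - rewrite Heq. replace (x0 + s - x0) with s by ring.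
    rewrite Rabs_mult. simpl pow.
    assert (Hxi' : Rabs (xi - x0) <= Rabs s).
    { unfold Rmin, Rmax in Hxi. destruct (Rle_dec x0 (x0+s));
      unfold Rabs; repeat destruct Rcase_abs; lra. }
    specialize (Hb xi Hxi).
    assert (Rabs (xi - x0) ^ n <= Rabs s ^ n).
    { apply pow_incr. split; [apply Rabs_pos| exact Hxi']. }
    assert (0 <= Rabs s) by apply Rabs_pos.
    assert (0 <= Rabs s ^ n) by (apply pow_le; lra).
    apply Rle_trans with (c * Rabs (xi - x0) ^ n * Rabs s).
    + apply Rmult_le_compat_r; lra.
    + replace (c * (Rabs s * Rabs s ^ n)) with (c * Rabs s ^ n * Rabs s) by ring.
      apply Rmult_le_compat_r; [lra|]. apply Rmult_le_compat_l; lra.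
Qed.


Lemma d_const (c t : R) : is_derive (fun _ => c) t 0.
Proof. apply (is_derive_const (K:=R_AbsRing) (V:=R_NormedModule)). Qed.
Lemma d_id (t : R) : is_derive (fun u => u) t 1.
Proof. apply (is_derive_id (K:=R_AbsRing)). Qed.
Lemma d_plus (f g : R -> R) t df dg : is_derive f t df -> is_derive g t dg ->
  is_derive (fun u => f u + g u) t (df + dg).
Proof. intros; apply (is_derive_plus (K:=R_AbsRing) (V:=R_NormedModule)); auto. Qed.
Lemma d_minus (f g : R -> R) t df dg : is_derive f t df -> is_derive g t dg ->
  is_derive (fun u => f u - g u) t (df - dg).
Proof. intros; apply (is_derive_minus (K:=R_AbsRing) (V:=R_NormedModule)); auto. Qed.

Fixpoint sumn (g : nat -> R) (n : nat) : R :=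
  match n with O => 0 | S m => g O + sumn (fun k => g (S k)) m end.

Lemma sumn_S g n : sumn g (S n) = g O + sumn (fun k => g (S k)) n.
Proof. reflexivity. Qed.

Lemma sumn_ext (g1 g2 : nat -> R) n :
  (forall k, (k < n)%nat -> g1 k = g2 k) -> sumn g1 n = sumn g2 n.
Proof.
  revert g1 g2; induction n; intros g1 g2 H; simpl; auto.
  rewrite (H O) by lia. f_equal. apply IHn. intros k Hk. apply H. lia.
Qed.

Lemma sumn_zero n : sumn (fun _ => 0) n = 0.
Proof. induction n; simpl; auto. rewrite IHn; ring. Qed.

Lemma is_derive_sumn (g dg : nat -> R -> R) n t :
  (forall k, (k < n)%nat -> is_derive (g k) t (dg k t)) ->
  is_derive (fun u => sumn (fun k => g k u) n) t (sumn (fun k => dg k t) n).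
Proof.
  revert g dg; induction n; intros g dg H; simpl.
  - apply d_const.
  - apply (d_plus (fun u => g O u) (fun u => sumn (fun k => g (S k) u) n)).
    + apply H. lia.
    + apply (IHn (fun k => g (S k)) (fun k => dg (S k))). intros k Hk; apply H; lia.
Qed.

Lemma taylor1d n : forall (G : nat -> R -> R) (M lo hi x s : R),
  0 <= M ->
  (forall k t, (k < n)%nat -> lo <= t <= hi -> is_derive (G k) t (G (S k) t)) ->
  (forall t, lo <= t <= hi -> Rabs (G n t) <= M) ->
  lo <= x <= hi -> lo <= x + s <= hi ->
  Rabs (G O (x+s) - sumn (fun k => G k x * s ^ k / INR (fact k)) n) <= M * Rabs s ^ n.
Proof.
  induction n; intros G M lo hi x s HM Hd Hb Hx Hxs.
  - simpl. rewrite Rminus_0_r, Rmult_1_r. apply Hb; lra.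
  - set (g := fun t => G O t - sumn (fun k => G k x * (t - x) ^ k / INR (fact k)) (S n)).
    set (dg := fun t => G 1%nat t - sumn (fun k => G (S k) x * (t - x) ^ k / INR (fact k)) n).
    assert (Hint : forall t, Rmin x (x+s) <= t <= Rmax x (x+s) -> lo <= t <= hi).
    { intros t Ht. unfold Rmin, Rmax in Ht. destruct (Rle_dec x (x+s)); lra. }
    assert (Hg : g (x + s) - g x = G O (x+s) - sumn (fun k => G k x * s ^ k / INR (fact k)) (S n)).
    { unfold g. replace (x + s - x) with s by ring. replace (x - x) with 0 by ring.
      assert (H0 : sumn (fun k => G k x * 0 ^ k / INR (fact k)) (S n) = G O x).
      { simpl sumn. rewrite (sumn_ext _ (fun _ => 0)).
        - rewrite sumn_zero. simpl. field.
        - intros k _. unfold Rdiv. simpl pow. ring. }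
      rewrite H0. ring. }
    rewrite <- Hg. apply mvt_bound with dg; auto.
    + intros t Ht. unfold g, dg.
      apply (d_minus (fun t => G O t)).
      { apply Hd; [lia| apply Hint; auto]. }
      replace (sumn (fun k => G (S k) x * (t - x) ^ k / INR (fact k)) n) with
        (sumn (fun k => G k x * (INR k * 1 * (t - x) ^ Init.Nat.pred k) / INR (fact k)) (S n)).
      * apply (is_derive_sumn (fun k u => G k x * (u - x) ^ k / INR (fact k))
                 (fun k u => G k x * (INR k * 1 * (u - x) ^ Init.Nat.pred k) / INR (fact k))).
        intros k _. unfold Rdiv.
        apply (is_derive_ext (fun u => (G k x * / INR (fact k)) * (u - x) ^ k)).
        { intros u; simpl; ring. }
        replace (G k x * (INR k * 1 * (t - x) ^ Init.Nat.pred k) * / INR (fact k))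
          with ((G k x * / INR (fact k)) * (INR k * 1 * (t - x) ^ Init.Nat.pred k)) by ring.
        apply is_derive_scal. apply (is_derive_pow (fun u => u - x) k t 1).
        assert (H1: is_derive (fun u => u - x) t (1-0)) by (apply d_minus; [apply d_id|apply d_const]).
        replace (1-0) with 1 in H1 by ring. exact H1.
      * rewrite sumn_S. rewrite Rmult_0_l, Rmult_0_l, Rmult_0_r, Rdiv_0_l, Rplus_0_l.
        apply sumn_ext. intros k _. change (fact (S k)) with (S k * fact k)%nat. rewrite mult_INR. change (Init.Nat.pred (S k)) with k.
        field. split; [apply not_0_INR, fact_neq_0 | apply not_0_INR; lia].
    + intros t Ht. unfold dg.
      replace t with (x + (t - x)) at 1 by ring.
      apply (IHn (fun k => G (S k)) M lo hi x (t - x)); auto.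
      * intros k u Hk Hu. apply Hd; [lia | auto].
      * replace (x + (t - x)) with t by ring. apply Hint; auto.
Qed.
From Stdlib Require Import Reals Lra Lia Factorial.
From Coquelicot Require Import Coquelicot.
Open Scope R_scope.

Lemma sumn_minus g1 g2 n : sumn (fun k => g1 k - g2 k) n = sumn g1 n - sumn g2 n.
Proof. revert g1 g2; induction n; intros; simpl; [ring|]. rewrite IHn. ring. Qed.
Lemma sumn_plus g1 g2 n : sumn (fun k => g1 k + g2 k) n = sumn g1 n + sumn g2 n.
Proof. revert g1 g2; induction n; intros; simpl; [ring|]. rewrite IHn. ring. Qed.
Lemma sumn_scal c g n : sumn (fun k => c * g k) n = c * sumn g n.
Proof. revert g; induction n; intros; simpl; [ring|]. rewrite IHn. ring. Qed.
Lemma sumn_abs g n : Rabs (sumn g n) <= sumn (fun k => Rabs (g k)) n.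
Proof. revert g; induction n; intros; simpl. rewrite Rabs_R0; lra.
  eapply Rle_trans; [apply Rabs_triang|]. specialize (IHn (fun k => g (S k))). lra. Qed.
Lemma sumn_le g1 g2 n : (forall k, (k < n)%nat -> g1 k <= g2 k) -> sumn g1 n <= sumn g2 n.
Proof. revert g1 g2; induction n; intros g1 g2 H; simpl; [lra|].
  assert (g1 O <= g2 O) by (apply H; lia).
  assert (sumn (fun k => g1 (S k)) n <= sumn (fun k => g2 (S k)) n) by (apply IHn; intros; apply H; lia).
  lra. Qed.
Lemma sumn_const c n : sumn (fun _ => c) n = INR n * c.
Proof. induction n; simpl sumn; [simpl; ring|]. rewrite IHn, S_INR. ring. Qed.

Lemma fact_ge1 k : 1 <= INR (fact k).
Proof. apply (le_INR 1). pose proof (lt_O_fact k). lia. Qed.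

Section T2.
Variables (a b M : R) (D : nat -> nat -> R -> R -> R).
Hypothesis Hder : forall i j x y, (i + j < 4)%nat -> a <= x <= b ->
        is_derive (fun t => D i j t y) x (D (S i) j x y) /\
        is_derive (fun t => D i j x t) y (D i (S j) x y).
Hypothesis Hbnd : forall i j x y, (i + j <= 4)%nat -> a <= x <= b -> Rabs (D i j x y) <= M.

Definition T2 (n : nat) (x z p q : R) : R :=
  sumn (fun i => sumn (fun j => D i j x z * p ^ i / INR (fact i) * q ^ j / INR (fact j)) (n - i)) n.

Lemma taylor2d n x z p q : (n <= 4)%nat -> a <= x -> 0 <= p -> x + p <= b ->
  Rabs (D O O (x + p) (z + q) - T2 n x z p q) <= (INR n + 1) * M * (p + Rabs q) ^ n.
Proof.
  intros Hn Hx Hp Hxp.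
  assert (HM : 0 <= M) by (eapply Rle_trans; [apply Rabs_pos| apply (Hbnd O O x z); [lia| split; lra]]).
  assert (H1 : Rabs (D O O (x+p) (z+q) - sumn (fun i => D i O x (z+q) * p ^ i / INR (fact i)) n)
              <= M * Rabs p ^ n).
  { apply (taylor1d n (fun k t => D k O t (z+q)) M a b x p HM).
    - intros k t Hk Ht. apply Hder; [lia|auto].
    - intros t Ht. apply Hbnd; [lia|auto].
    - split; lra. - split; lra. }
  rewrite (Rabs_pos_eq p) in H1 by lra.
  assert (H2 : forall i, (i < n)%nat ->
     Rabs (D i O x (z+q) - sumn (fun j => D i j x z * q ^ j / INR (fact j)) (n - i))
       <= M * Rabs q ^ (n - i)).
  { intros i Hi.
    apply (taylor1d (n - i) (fun j s => D i j x s) M (z - Rabs q) (z + Rabs q) z q HM).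
    - intros k t Hk Ht. apply Hder; [lia|lra].
    - intros t Ht. apply Hbnd; [lia|lra].
    - pose proof (Rabs_pos q); split; lra.
    - unfold Rabs; destruct Rcase_abs; split; lra. }
  set (S0 := sumn (fun i => D i O x (z+q) * p ^ i / INR (fact i)) n).
  replace (D O O (x + p) (z + q) - T2 n x z p q) with
    ((D O O (x+p) (z+q) - S0) +
     sumn (fun i => p ^ i / INR (fact i) *
        (D i O x (z+q) - sumn (fun j => D i j x z * q ^ j / INR (fact j)) (n - i))) n).
  2:{ assert (E : T2 n x z p q = sumn (fun i => p ^ i / INR (fact i) *
            sumn (fun j => D i j x z * q ^ j / INR (fact j)) (n - i)) n).
      { unfold T2. apply sumn_ext. intros i _. rewrite <- sumn_scal. apply sumn_ext.
        intros j _. field. split; apply not_0_INR, fact_neq_0. }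
      rewrite E. unfold S0.
      rewrite (sumn_ext (fun i => p ^ i / INR (fact i) *
        (D i O x (z+q) - sumn (fun j => D i j x z * q ^ j / INR (fact j)) (n - i))) (fun i => D i O x (z + q) * p ^ i / INR (fact i) -
         p ^ i / INR (fact i) * sumn (fun j => D i j x z * q ^ j / INR (fact j)) (n - i))).
      2:{ intros k _. unfold Rdiv. ring. }
      rewrite sumn_minus. ring. }
  eapply Rle_trans; [apply Rabs_triang|].
  eapply Rle_trans; [apply Rplus_le_compat; [exact H1| apply sumn_abs]|].
  assert (Hpq : 0 <= p + Rabs q) by (pose proof (Rabs_pos q); lra).
  eapply Rle_trans; [apply Rplus_le_compat_l; apply (sumn_le _ (fun _ => M * (p + Rabs q) ^ n))|].
  - intros i Hi. rewrite Rabs_mult. specialize (H2 i Hi).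
    assert (A1 : Rabs (p ^ i / INR (fact i)) <= (p + Rabs q) ^ i).
    { pose proof (fact_ge1 i). rewrite Rabs_pos_eq.
      2:{ apply Rmult_le_pos; [apply pow_le; lra| apply Rlt_le, Rinv_0_lt_compat; lra]. }
      apply Rle_trans with (p ^ i).
      - unfold Rdiv. rewrite <- (Rmult_1_r (p ^ i)) at 2. apply Rmult_le_compat_l; [apply pow_le; lra|].
        rewrite <- Rinv_1. apply Rinv_le_contravar; lra.
      - apply pow_incr. pose proof (Rabs_pos q). lra. }
    assert (A2 : Rabs q ^ (n - i) <= (p + Rabs q) ^ (n - i)).
    { apply pow_incr. pose proof (Rabs_pos q). lra. }
    replace (M * (p + Rabs q) ^ n) with ((p + Rabs q) ^ i * (M * (p + Rabs q) ^ (n - i))).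
    2:{ replace ((p + Rabs q) ^ n) with ((p + Rabs q) ^ i * (p + Rabs q) ^ (n - i)) by (rewrite <- pow_add; f_equal; lia). ring. }
    apply Rmult_le_compat; try apply Rabs_pos.
    + exact A1.
    + eapply Rle_trans; [exact H2|]. apply Rmult_le_compat_l; auto.
  - rewrite sumn_const.
    assert (p ^ n <= (p + Rabs q) ^ n) by (apply pow_incr; pose proof (Rabs_pos q); lra).
    assert (0 <= M * (p + Rabs q) ^ n) by (apply Rmult_le_pos; auto; apply pow_le; auto).
    nra.
Qed.
End T2.
From Stdlib Require Import Reals Lra Lia Factorial.
From Coquelicot Require Import Coquelicot.
Open Scope R_scope.

Section Ord.
Variables (a b : R).
Hypothesis Hab : a < b.

Definition ord (n : nat) (u : R -> R -> R) : Prop :=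
  exists K, 0 <= K /\ forall x p, a <= x -> 0 <= p -> x + p <= b -> Rabs (u x p) <= K * p ^ n.

Lemma ord_ext n (u v : R -> R -> R) :
  (forall x p, a <= x -> 0 <= p -> x + p <= b -> v x p = u x p) -> ord n u -> ord n v.
Proof. intros H [K [HK0 HK]]. exists K. split; auto. intros x p H1 H2 H3. rewrite H by auto. auto. Qed.

Lemma ord_const c : ord 0 (fun _ _ => c).
Proof. exists (Rabs c). split; [apply Rabs_pos|]. intros. simpl. lra. Qed.

Lemma ord_p : ord 1 (fun _ p => p).
Proof. exists 1. split; [lra|]. intros. simpl. rewrite Rabs_pos_eq by lra. lra. Qed.

Lemma pow_weak p k m : 0 <= p <= b - a -> (k <= m)%nat -> p ^ m <= (b - a) ^ (m - k) * p ^ k.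
Proof.
  intros Hp Hkm. replace m with ((m - k) + k)%nat at 1 by lia. rewrite pow_add.
  apply Rmult_le_compat_r; [apply pow_le; lra|]. apply pow_incr. lra.
Qed.

Lemma ord_weak m n u : ord m u -> (n <= m)%nat -> ord n u.
Proof.
  intros [K [HK0 HK]] Hnm. exists (K * (b - a) ^ (m - n)). split.
  { apply Rmult_le_pos; auto. apply pow_le; lra. }
  intros x p Hx Hp Hxp. eapply Rle_trans; [apply HK; auto|].
  rewrite Rmult_assoc. apply Rmult_le_compat_l; auto. apply pow_weak; auto. lra.
Qed.

Lemma ord_add m n u v : ord m u -> ord n v -> ord (Nat.min m n) (fun x p => u x p + v x p).
Proof.
  intros Hu Hv.
  destruct (ord_weak m (Nat.min m n) u Hu ltac:(lia)) as [K1 [H10 H1]].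
  destruct (ord_weak n (Nat.min m n) v Hv ltac:(lia)) as [K2 [H20 H2]].
  exists (K1 + K2). split; [lra|]. intros x p Hx Hp Hxp.
  eapply Rle_trans; [apply Rabs_triang|].
  specialize (H1 x p Hx Hp Hxp). specialize (H2 x p Hx Hp Hxp). lra.
Qed.

Lemma ord_opp n u : ord n u -> ord n (fun x p => - u x p).
Proof. intros [K [H0 H]]. exists K. split; auto. intros. rewrite Rabs_Ropp. auto. Qed.

Lemma ord_sub m n u v : ord m u -> ord n v -> ord (Nat.min m n) (fun x p => u x p - v x p).
Proof. intros Hu Hv. apply (ord_add m n u (fun x p => - v x p)); auto. apply ord_opp; auto. Qed.

Lemma ord_mul m n u v : ord m u -> ord n v -> ord (m + n) (fun x p => u x p * v x p).
Proof.
  intros [K1 [H10 H1]] [K2 [H20 H2]]. exists (K1 * K2). split; [apply Rmult_le_pos; auto|].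
  intros x p Hx Hp Hxp. rewrite Rabs_mult, pow_add.
  specialize (H1 x p Hx Hp Hxp). specialize (H2 x p Hx Hp Hxp).
  replace (K1 * K2 * (p ^ m * p ^ n)) with ((K1 * p ^ m) * (K2 * p ^ n)) by ring.
  apply Rmult_le_compat; auto; apply Rabs_pos.
Qed.

Lemma ord_pow m k u : ord m u -> ord (k * m) (fun x p => u x p ^ k).
Proof.
  intros Hu. induction k.
  - simpl. apply (ord_ext 0 (fun _ _ => 1)); [intros; reflexivity| apply ord_const].
  - replace (S k * m)%nat with (m + k * m)%nat by lia.
    apply (ord_ext _ (fun x p => u x p * u x p ^ k)); [intros; reflexivity|].
    apply ord_mul; auto.
Qed.

Lemma ord_div m u c : ord m u -> ord m (fun x p => u x p / c).
Proof.
  intros Hu. apply (ord_ext _ (fun x p => u x p * / c)); [intros; reflexivity|].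
  replace m with (m + 0)%nat by lia. apply ord_mul; auto. apply ord_const.
Qed.

End Ord.
From Stdlib Require Import Reals Lra Lia Factorial.
From Coquelicot Require Import Coquelicot.
Open Scope R_scope.

Section Main.
Variables (a b M : R) (f : R -> R -> R) (y : R -> R) (D : nat -> nat -> R -> R -> R).
Hypothesis Hab : a < b.
Hypothesis HD0 : forall x z, D O O x z = f x z.
Hypothesis Hder : forall i j x z, (i + j < 4)%nat -> a <= x <= b ->
        is_derive (fun t => D i j t z) x (D (S i) j x z) /\
        is_derive (fun t => D i j x t) z (D i (S j) x z).
Hypothesis Hbnd : forall i j x z, (i + j <= 4)%nat -> a <= x <= b -> Rabs (D i j x z) <= M.
Hypothesis Hy : forall x, a <= x <= b -> is_derive y x (f x (y x)).

Lemma M0 : 0 <= M.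
Proof. eapply Rle_trans; [apply Rabs_pos| apply (Hbnd O O a 0); [lia| split; lra]]. Qed.

Lemma fbnd x z : a <= x <= b -> Rabs (f x z) <= M.
Proof. intros. rewrite <- HD0. apply Hbnd; auto. Qed.

Lemma ord_D i j : (i + j <= 4)%nat -> ord a b 0 (fun x p => D i j x (y x)).
Proof. intros H. exists M. split; [apply M0|]. intros x p Hx Hp Hxp. simpl. rewrite Rmult_1_r.
  apply Hbnd; auto. split; lra. Qed.

Lemma ord_f0 : ord a b 0 (fun x p => f x (y x)).
Proof. exists M. split; [apply M0|]. intros x p Hx Hp Hxp. simpl. rewrite Rmult_1_r.
  apply fbnd. split; lra. Qed.

Lemma ord_yq : ord a b 1 (fun x p => y (x + p) - y x).
Proof.
  exists M. split; [apply M0|]. intros x p Hx Hp Hxp.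
  assert (Hm: forall t, Rmin x (x+p) <= t <= Rmax x (x+p) -> a <= t <= b).
  { intros t Ht. unfold Rmin, Rmax in Ht. destruct (Rle_dec x (x+p)); split; lra. }
  pose proof (mvt_bound y (fun t => f t (y t)) x p M 0 M0) as H.
  rewrite (Rabs_pos_eq p) in H by lra. apply H.
  - intros t Ht. apply Hy, Hm, Ht.
  - intros t Ht. simpl. rewrite Rmult_1_r. apply fbnd, Hm, Ht.
Qed.

Lemma taylor2d_ord n (Pf Qf : R -> R -> R) c : (n <= 4)%nat -> 0 <= c ->
  (forall x p, a <= x -> 0 <= p -> x + p <= b ->
     0 <= Pf x p /\ x + Pf x p <= b /\ Pf x p + Rabs (Qf x p) <= c * p) ->
  ord a b n (fun x p => f (x + Pf x p) (y x + Qf x p) - T2 D n x (y x) (Pf x p) (Qf x p)).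
Proof.
  intros Hn Hc H. exists ((INR n + 1) * M * c ^ n). split.
  { apply Rmult_le_pos; [apply Rmult_le_pos; [pose proof (pos_INR n); lra| apply M0]| apply pow_le; auto]. }
  intros x p Hx Hp Hxp. destruct (H x p Hx Hp Hxp) as [H1 [H2 H3]].
  rewrite <- HD0. eapply Rle_trans; [apply (taylor2d a b M D Hder Hbnd n x (y x) (Pf x p) (Qf x p)); auto|].
  replace ((INR n + 1) * M * c ^ n * p ^ n) with ((INR n + 1) * M * (c ^ n * p ^ n)) by ring.
  apply Rmult_le_compat_l.
  { apply Rmult_le_pos; [pose proof (pos_INR n); lra| apply M0]. }
  rewrite <- Rpow_mult_distr. apply pow_incr. split; auto. pose proof (Rabs_pos (Qf x p)); lra.
Qed.

Lemma boot n (P Pd : R -> R -> R) :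
  ord a b n (fun x p => f (x + p) (y (x + p)) - Pd x p) ->
  (forall x p, is_derive (P x) p (Pd x p)) -> (forall x, P x 0 = 0) ->
  ord a b (S n) (fun x p => y (x + p) - y x - P x p).
Proof.
  intros [K [HK0 HK]] HP HP0. exists K. split; auto. intros x p Hx Hp Hxp.
  assert (Hm: forall t, Rmin x (x+p) <= t <= Rmax x (x+p) -> x <= t <= x + p).
  { intros t Ht. unfold Rmin, Rmax in Ht. destruct (Rle_dec x (x+p)); split; lra. }
  pose proof (mvt_bound (fun t => y t - y x - P x (t - x)) (fun t => f t (y t) - Pd x (t - x))
                x p K n HK0) as H.
  rewrite (Rabs_pos_eq p) in H by lra.
  replace (y (x + p) - y x - P x p) with
    ((y (x + p) - y x - P x (x + p - x)) - (y x - y x - P x (x - x))).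
  2:{ replace (x + p - x) with p by ring. replace (x - x) with 0 by ring. rewrite HP0. ring. }
  apply H.
  - intros t Ht. destruct (Hm t Ht) as [Ht1 Ht2].
    assert (E : f t (y t) - Pd x (t - x) = f t (y t) - 0 - 1 * Pd x (t - x)) by ring.
    rewrite E. apply d_minus; [apply d_minus|].
    + apply Hy. split; lra.
    + apply d_const.
    + apply (is_derive_comp (P x) (fun t => t - x) t (Pd x (t - x)) 1).
      * apply HP.
      * assert (H1: is_derive (fun u => u - x) t (1-0)) by (apply d_minus; [apply d_id|apply d_const]).
        replace (1-0) with 1 in H1 by ring. exact H1.
  - intros t Ht. destruct (Hm t Ht) as [Ht1 Ht2].
    specialize (HK x (t - x) Hx ltac:(lra) ltac:(lra)).
    replace (x + (t - x)) with t in HK by ring.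
    rewrite (Rabs_pos_eq (t - x)) by lra. exact HK.
Qed.

Definition oadd m n u v := ord_add a b Hab m n u v.
Definition osub m n u v := ord_sub a b Hab m n u v.
Definition omul m n u v := ord_mul a b m n u v.
Definition oopp n u := ord_opp a b n u.
Definition opow m k u := ord_pow a b m k u.
Definition odiv m u c := ord_div a b m u c.
Definition oweak m n u := ord_weak a b Hab m n u.
Definition oconst c := ord_const a b c.
Definition op := ord_p a b.

Ltac ordE := first
  [ eassumption
  | apply oconst
  | apply op
  | apply ord_f0
  | (apply ord_D; lia)
  | match goal with
    | |- ord _ _ _ (fun x p => @?u x p + @?v x p) => eapply (oadd _ _ u v); ordE
    | |- ord _ _ _ (fun x p => @?u x p - @?v x p) => eapply (osub _ _ u v); ordE
    | |- ord _ _ _ (fun x p => @?u x p * @?v x p) => eapply (omul _ _ u v); ordE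
    | |- ord _ _ _ (fun x p => - @?u x p) => eapply (oopp _ u); ordE
    | |- ord _ _ _ (fun x p => @?u x p ^ ?k) => eapply (opow _ k u); ordE
    | |- ord _ _ _ (fun x p => @?u x p / ?c) => eapply (odiv _ u c); ordE
    end ].

Ltac ordN := eapply oweak; [ordE | cbn; lia].

Lemma yq_bnd x p : a <= x -> 0 <= p -> x + p <= b -> Rabs (y (x + p) - y x) <= M * p.
Proof.
  intros Hx Hp Hxp.
  assert (Hm: forall t, Rmin x (x+p) <= t <= Rmax x (x+p) -> a <= t <= b).
  { intros t Ht. unfold Rmin, Rmax in Ht. destruct (Rle_dec x (x+p)); split; lra. }
  pose proof (mvt_bound y (fun t => f t (y t)) x p M 0 M0) as H.
  rewrite (Rabs_pos_eq p) in H by lra. simpl pow in H. rewrite !Rmult_1_r in H. apply H.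
  - intros t Ht. apply Hy, Hm, Ht.
  - intros t Ht. apply fbnd, Hm, Ht.
Qed.

Lemma HRn n : (n <= 4)%nat ->
  ord a b n (fun x p => f (x + p) (y (x + p)) - T2 D n x (y x) p (y (x + p) - y x)).
Proof.
  intros Hn.
  eapply ord_ext; [| apply (taylor2d_ord n (fun x p => p) (fun x p => y (x+p) - y x) (1 + M))].
  - intros x p _ _ _. cbv beta. replace (y x + (y (x + p) - y x)) with (y (x+p)) by ring. reflexivity.
  - exact Hn.
  - pose proof M0; lra.
  - intros x p Hx Hp Hxp. pose proof (yq_bnd x p Hx Hp Hxp). split; [lra|split;[lra|]]. lra.
Qed.
Definition Pd1 (x p : R) : R := (1) * (f x (y x)).
Definition Py2 (x p : R) : R := (1) * (f x (y x)) * (p).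
Definition Pd2 (x p : R) : R := (1) * (f x (y x)) + (1) * (f x (y x)) * (D 0 1 x (y x)) * (p) + (1) * (D 1 0 x (y x)) * (p).
Definition Py3 (x p : R) : R := (1/2) * (f x (y x)) * (D 0 1 x (y x)) * (p)^2 + (1) * (f x (y x)) * (p) + (1/2) * (D 1 0 x (y x)) * (p)^2.
Definition Pd3 (x p : R) : R := (1) * (f x (y x)) + (1) * (f x (y x)) * (D 0 1 x (y x)) * (p) + (1/2) * (f x (y x)) * (D 0 1 x (y x))^2 * (p)^2 + (1) * (f x (y x)) * (D 1 1 x (y x)) * (p)^2 + (1/2) * (f x (y x))^2 * (D 0 2 x (y x)) * (p)^2 + (1/2) * (D 0 1 x (y x)) * (D 1 0 x (y x)) * (p)^2 + (1) * (D 1 0 x (y x)) * (p) + (1/2) * (D 2 0 x (y x)) * (p)^2.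
Definition Py4 (x p : R) : R := (1/2) * (f x (y x)) * (D 0 1 x (y x)) * (p)^2 + (1/6) * (f x (y x)) * (D 0 1 x (y x))^2 * (p)^3 + (1/3) * (f x (y x)) * (D 1 1 x (y x)) * (p)^3 + (1) * (f x (y x)) * (p) + (1/6) * (f x (y x))^2 * (D 0 2 x (y x)) * (p)^3 + (1/6) * (D 0 1 x (y x)) * (D 1 0 x (y x)) * (p)^3 + (1/2) * (D 1 0 x (y x)) * (p)^2 + (1/6) * (D 2 0 x (y x)) * (p)^3.
Definition Pd4 (x p : R) : R := (1) * (f x (y x)) + (5/6) * (f x (y x)) * (D 0 1 x (y x)) * (D 1 1 x (y x)) * (p)^3 + (1) * (f x (y x)) * (D 0 1 x (y x)) * (p) + (1/2) * (f x (y x)) * (D 0 1 x (y x))^2 * (p)^2 + (1/6) * (f x (y x)) * (D 0 1 x (y x))^3 * (p)^3 + (1/2) * (f x (y x)) * (D 0 2 x (y x)) * (D 1 0 x (y x)) * (p)^3 + (1) * (f x (y x)) * (D 1 1 x (y x)) * (p)^2 + (1/2) * (f x (y x)) * (D 2 1 x (y x)) * (p)^3 + (2/3) * (f x (y x))^2 * (D 0 1 x (y x)) * (D 0 2 x (y x)) * (p)^3 + (1/2) * (f x (y x))^2 * (D 0 2 x (y x)) * (p)^2 + (1/2) * (f x (y x))^2 * (D 1 2 x (y x)) * (p)^3 + (1/6) * (f x (y x))^3 * (D 0 3 x (y x)) * (p)^3 + (1/2) * (D 0 1 x (y x)) * (D 1 0 x (y x)) * (p)^2 + (1/6) * (D 0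 1 x (y x)) * (D 2 0 x (y x)) * (p)^3 + (1/6) * (D 0 1 x (y x))^2 * (D 1 0 x (y x)) * (p)^3 + (1/2) * (D 1 0 x (y x)) * (D 1 1 x (y x)) * (p)^3 + (1) * (D 1 0 x (y x)) * (p) + (1/2) * (D 2 0 x (y x)) * (p)^2 + (1/6) * (D 3 0 x (y x)) * (p)^3.
Definition Py5 (x p : R) : R := (5/24) * (f x (y x)) * (D 0 1 x (y x)) * (D 1 1 x (y x)) * (p)^4 + (1/2) * (f x (y x)) * (D 0 1 x (y x)) * (p)^2 + (1/6) * (f x (y x)) * (D 0 1 x (y x))^2 * (p)^3 + (1/24) * (f x (y x)) * (D 0 1 x (y x))^3 * (p)^4 + (1/8) * (f x (y x)) * (D 0 2 x (y x)) * (D 1 0 x (y x)) * (p)^4 + (1/3) * (f x (y x)) * (D 1 1 x (y x)) * (p)^3 + (1/8) * (f x (y x)) * (D 2 1 x (y x)) * (p)^4 + (1) * (f x (y x)) * (p) + (1/6) * (f x (y x))^2 * (D 0 1 x (y x)) * (D 0 2 x (y x)) * (p)^4 + (1/6) * (f x (y x))^2 * (D 0 2 x (y x)) * (p)^3 + (1/8) * (f x (y x))^2 * (D 1 2 x (y x)) * (p)^4 + (1/24) * (f x (y x))^3 * (D 0 3 x (y x)) * (p)^4 + (1/6) * (D 0 1 x (y x)) * (D 1 0 x (y x)) * (p)^3 + (1/24) * (D 0 1 x (y x)) * (D 2 0 x (y x)) * (p)^4 + (1/24) * (D 0 1 x (y x))^2 * (D 1 0 x (y x)) * (p)^4 + (1/8)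 * (D 1 0 x (y x)) * (D 1 1 x (y x)) * (p)^4 + (1/2) * (D 1 0 x (y x)) * (p)^2 + (1/6) * (D 2 0 x (y x)) * (p)^3 + (1/24) * (D 3 0 x (y x)) * (p)^4.

Lemma lev1 : ord a b 1 (fun x p => f (x + p) (y (x + p)) - Pd1 x p).
Proof.
  pose proof ord_yq as HE.
  pose proof (HRn 1 ltac:(lia)) as HR.
  apply (ord_ext a b 1 (fun x p => (f (x + p) (y (x + p)) - T2 D 1 x (y x) p (y (x + p) - y x)))).
  - intros x p _ _ _. unfold Pd1, T2. simpl. rewrite ?HD0. field.
  - ordN.
Qed.

Lemma boot1 : ord a b 2 (fun x p => y (x + p) - y x - Py2 x p).
Proof.
  apply (boot 1 Py2 Pd1 lev1).
  - intros x p. unfold Py2, Pd1. auto_derive; [exact I| field].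
  - intros x. unfold Py2. ring.
Qed.

Lemma lev2 : ord a b 2 (fun x p => f (x + p) (y (x + p)) - Pd2 x p).
Proof.
  pose proof boot1 as HE.
  pose proof (HRn 2 ltac:(lia)) as HR.
  apply (ord_ext a b 2 (fun x p => (f (x + p) (y (x + p)) - T2 D 2 x (y x) p (y (x + p) - y x)) + ((1) * (D 0 1 x (y x)) * ((y (x + p) - y x - Py2 x p))))).
  - intros x p _ _ _. unfold Pd2, Py2, T2. simpl. rewrite ?HD0. field.
  - ordN.
Qed.

Lemma boot2 : ord a b 3 (fun x p => y (x + p) - y x - Py3 x p).
Proof.
  apply (boot 2 Py3 Pd2 lev2).
  - intros x p. unfold Py3, Pd2. auto_derive; [exact I| field].
  - intros x. unfold Py3. ring.
Qed.

Lemma lev3 : ord a b 3 (fun x p => f (x + p) (y (x + p)) - Pd3 x p).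
Proof.
  pose proof boot2 as HE.
  pose proof (HRn 3 ltac:(lia)) as HR.
  apply (ord_ext a b 3 (fun x p => (f (x + p) (y (x + p)) - T2 D 3 x (y x) p (y (x + p) - y x)) + ((1/4) * (f x (y x)) * (D 0 1 x (y x)) * (D 0 2 x (y x)) * (D 1 0 x (y x)) * (p)^4 + (1/2) * (f x (y x)) * (D 0 1 x (y x)) * (D 0 2 x (y x)) * ((y (x + p) - y x - Py3 x p)) * (p)^2 + (1/2) * (f x (y x)) * (D 0 1 x (y x)) * (D 1 1 x (y x)) * (p)^3 + (1/2) * (f x (y x)) * (D 0 2 x (y x)) * (D 1 0 x (y x)) * (p)^3 + (1) * (f x (y x)) * (D 0 2 x (y x)) * ((y (x + p) - y x - Py3 x p)) * (p) + (1/2) * (f x (y x))^2 * (D 0 1 x (y x)) * (D 0 2 x (y x)) * (p)^3 + (1/8) * (f x (y x))^2 * (D 0 1 x (y x))^2 * (D 0 2 x (y x)) * (p)^4 + (1) * (D 0 1 x (y x)) * ((y (x + p) - y x - Py3 x p)) + (1/2) * (D 0 2 x (y x)) * (D 1 0 x (y x)) * ((y (x + p) - y x - Py3 x p)) * (p)^2 + (1/8) * (D 0 2 x (y x)) * (D 1 0 x (y x))^2 * (p)^4 + (1/2) * (D 0 2 x (y x)) * ((y (x + p) - y x - Py3 x p))^2 + (1/2) * (D 1 0 x (y x)) * (D 1 1 x (y x)) * (p)^3 + (1) * (D 1 1 x (y x)) * ((y (x + p) - y x - Py3 x p)) * (p)))).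
  - intros x p _ _ _. unfold Pd3, Py3, T2. simpl. rewrite ?HD0. field.
  - ordN.
Qed.

Lemma boot3 : ord a b 4 (fun x p => y (x + p) - y x - Py4 x p).
Proof.
  apply (boot 3 Py4 Pd3 lev3).
  - intros x p. unfold Py4, Pd3. auto_derive; [exact I| field].
  - intros x. unfold Py4. ring.
Qed.

Lemma lev4 : ord a b 4 (fun x p => f (x + p) (y (x + p)) - Pd4 x p).
Proof.
  pose proof boot3 as HE.
  pose proof (HRn 4 ltac:(lia)) as HR.
  apply (ord_ext a b 4 (fun x p => (f (x + p) (y (x + p)) - T2 D 4 x (y x) p (y (x + p) - y x)) + ((1/18) * (f x (y x)) * (D 0 1 x (y x)) * (D 0 2 x (y x)) * (D 1 0 x (y x)) * (D 1 1 x (y x)) * (p)^6 + (5/12) * (f x (y x)) * (D 0 1 x (y x)) * (D 0 2 x (y x)) * (D 1 0 x (y x)) * (p)^4 + (1/12) * (f x (y x)) * (D 0 1 x (y x)) * (D 0 2 x (y x)) * (D 2 0 x (y x)) * (p)^5 + (1/2) * (f x (y x)) * (D 0 1 x (y x)) * (D 0 2 x (y x)) * ((y (x + p) - y x - Py4 x p)) * (p)^2 + (1/108) * (f x (y x)) * (D 0 1 x (y x)) * (D 0 3 x (y x)) * (D 1 0 x (y x)) * (D 1 1 x (y x)) * (D 2 0 x (y x)) * (p)^9 + (1/18) * (f x (y x)) * (D 0 1 x (y x)) * (D 0 3 x (y x)) * (D 1 0 x (y x)) * (D 1 1 x (y x)) * ((y (x + p) - y x - Py4 x p)) * (p)^6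 + (5/72) * (f x (y x)) * (D 0 1 x (y x)) * (D 0 3 x (y x)) * (D 1 0 x (y x)) * (D 2 0 x (y x)) * (p)^7 + (5/12) * (f x (y x)) * (D 0 1 x (y x)) * (D 0 3 x (y x)) * (D 1 0 x (y x)) * ((y (x + p) - y x - Py4 x p)) * (p)^4 + (1/36) * (f x (y x)) * (D 0 1 x (y x)) * (D 0 3 x (y x)) * (D 1 0 x (y x))^2 * (D 1 1 x (y x)) * (p)^8 + (7/48) * (f x (y x)) * (D 0 1 x (y x)) * (D 0 3 x (y x)) * (D 1 0 x (y x))^2 * (p)^6 + (1/12) * (f x (y x)) * (D 0 1 x (y x)) * (D 0 3 x (y x)) * (D 2 0 x (y x)) * ((y (x + p) - y x - Py4 x p)) * (p)^5 + (1/144) * (f x (y x)) * (D 0 1 x (y x)) * (D 0 3 x (y x)) * (D 2 0 x (y x))^2 * (p)^8 + (1/4) * (f x (y x)) * (D 0 1 x (y x)) * (D 0 3 x (y x)) * ((y (x + p) - y x - Py4 x p))^2 * (p)^2 + (1/18) * (f x (y x)) * (D 0 1 x (y x)) * (D 1 0 x (y x)) * (D 1 1 x (y x)) * (D 1 2 x (y x)) * (p)^7 + (5/12) * (f x (y x)) * (D 0 1 x (y x)) * (D 1 0 x (y x)) * (D 1 2 x (y x)) * (p)^5 + (1/12) * (f x (y x)) * (D 0 1 x (y x)) * (D 1 2 x (y x)) * (D 2 0 x (y x)) * (p)^6 + (1/2) * (f x (y x)) * (D 0 1 x (y x)) * (D 1 2 x (y x)) * ((y (x + p) - y x - Py4 x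 p)) * (p)^3 + (1/4) * (f x (y x)) * (D 0 1 x (y x)) * (D 2 1 x (y x)) * (p)^4 + (1/6) * (f x (y x)) * (D 0 1 x (y x))^2 * (D 0 2 x (y x)) * (D 1 0 x (y x)) * (p)^5 + (1/36) * (f x (y x)) * (D 0 1 x (y x))^2 * (D 0 2 x (y x)) * (D 2 0 x (y x)) * (p)^6 + (1/6) * (f x (y x)) * (D 0 1 x (y x))^2 * (D 0 2 x (y x)) * ((y (x + p) - y x - Py4 x p)) * (p)^3 + (1/36) * (f x (y x)) * (D 0 1 x (y x))^2 * (D 0 3 x (y x)) * (D 1 0 x (y x)) * (D 2 0 x (y x)) * (p)^8 + (1/6) * (f x (y x)) * (D 0 1 x (y x))^2 * (D 0 3 x (y x)) * (D 1 0 x (y x)) * ((y (x + p) - y x - Py4 x p)) * (p)^5 + (1/216) * (f x (y x)) * (D 0 1 x (y x))^2 * (D 0 3 x (y x)) * (D 1 0 x (y x))^2 * (D 1 1 x (y x)) * (p)^9 + (11/144) * (f x (y x)) * (D 0 1 x (y x))^2 * (D 0 3 x (y x)) * (D 1 0 x (y x))^2 * (p)^7 + (1/36) * (f x (y x)) * (D 0 1 x (y x))^2 * (D 0 3 x (y x)) * (D 2 0 x (y x)) * ((y (x + p) - y x - Py4 x p)) * (p)^6 + (1/432) * (f x (y x)) * (D 0 1 x (y x))^2 * (D 0 3 x (y x)) * (D 2 0 x (y x))^2 * (p)^9 + (1/12) * (f x (y x)) * (D 0 1 x (y x))^2 * (D 0 3 x (y x)) * ((y (x + p) - y x - Py4 x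 p))^2 * (p)^3 + (1/6) * (f x (y x)) * (D 0 1 x (y x))^2 * (D 1 0 x (y x)) * (D 1 2 x (y x)) * (p)^6 + (1/6) * (f x (y x)) * (D 0 1 x (y x))^2 * (D 1 1 x (y x)) * (p)^4 + (1/36) * (f x (y x)) * (D 0 1 x (y x))^2 * (D 1 2 x (y x)) * (D 2 0 x (y x)) * (p)^7 + (1/6) * (f x (y x)) * (D 0 1 x (y x))^2 * (D 1 2 x (y x)) * ((y (x + p) - y x - Py4 x p)) * (p)^4 + (1/12) * (f x (y x)) * (D 0 1 x (y x))^2 * (D 2 1 x (y x)) * (p)^5 + (1/36) * (f x (y x)) * (D 0 1 x (y x))^3 * (D 0 2 x (y x)) * (D 1 0 x (y x)) * (p)^6 + (1/216) * (f x (y x)) * (D 0 1 x (y x))^3 * (D 0 3 x (y x)) * (D 1 0 x (y x)) * (D 2 0 x (y x)) * (p)^9 + (1/36) * (f x (y x)) * (D 0 1 x (y x))^3 * (D 0 3 x (y x)) * (D 1 0 x (y x)) * ((y (x + p) - y x - Py4 x p)) * (p)^6 + (1/48) * (f x (y x)) * (D 0 1 x (y x))^3 * (D 0 3 x (y x)) * (D 1 0 x (y x))^2 * (p)^8 + (1/36) * (f x (y x)) * (D 0 1 x (y x))^3 * (D 1 0 x (y x)) * (D 1 2 x (y x)) * (p)^7 + (1/432) * (f x (y x)) * (D 0 1 x (y x))^4 * (D 0 3 x (y x)) * (D 1 0 x (y x))^2 * (p)^9 + (1/6) * (f x (y x)) * (D 0 2 x (y x)) * (D 1 0 x (y x)) *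 (D 1 1 x (y x)) * (p)^5 + (1/18) * (f x (y x)) * (D 0 2 x (y x)) * (D 1 1 x (y x)) * (D 2 0 x (y x)) * (p)^6 + (1/3) * (f x (y x)) * (D 0 2 x (y x)) * (D 1 1 x (y x)) * ((y (x + p) - y x - Py4 x p)) * (p)^3 + (1/6) * (f x (y x)) * (D 0 2 x (y x)) * (D 2 0 x (y x)) * (p)^4 + (1) * (f x (y x)) * (D 0 2 x (y x)) * ((y (x + p) - y x - Py4 x p)) * (p) + (1/36) * (f x (y x)) * (D 0 3 x (y x)) * (D 1 0 x (y x)) * (D 1 1 x (y x)) * (D 2 0 x (y x)) * (p)^8 + (1/6) * (f x (y x)) * (D 0 3 x (y x)) * (D 1 0 x (y x)) * (D 1 1 x (y x)) * ((y (x + p) - y x - Py4 x p)) * (p)^5 + (1/12) * (f x (y x)) * (D 0 3 x (y x)) * (D 1 0 x (y x)) * (D 2 0 x (y x)) * (p)^6 + (1/2) * (f x (y x)) * (D 0 3 x (y x)) * (D 1 0 x (y x)) * ((y (x + p) - y x - Py4 x p)) * (p)^3 + (1/24) * (f x (y x)) * (D 0 3 x (y x)) * (D 1 0 x (y x))^2 * (D 1 1 x (y x)) * (p)^7 + (1/8) * (f x (y x)) * (D 0 3 x (y x)) * (D 1 0 x (y x))^2 * (p)^5 + (1/18) * (f x (y x)) * (D 0 3 x (y x)) * (D 1 1 x (y x)) * (D 2 0 x (y x)) * ((y (x + p) - y x - Py4 x p)) * (p)^6 + (1/216) * (f x (y x)) * (D 0 3 x (y x)) * (D 1 1 x (y x))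 * (D 2 0 x (y x))^2 * (p)^9 + (1/6) * (f x (y x)) * (D 0 3 x (y x)) * (D 1 1 x (y x)) * ((y (x + p) - y x - Py4 x p))^2 * (p)^3 + (1/6) * (f x (y x)) * (D 0 3 x (y x)) * (D 2 0 x (y x)) * ((y (x + p) - y x - Py4 x p)) * (p)^4 + (1/72) * (f x (y x)) * (D 0 3 x (y x)) * (D 2 0 x (y x))^2 * (p)^7 + (1/2) * (f x (y x)) * (D 0 3 x (y x)) * ((y (x + p) - y x - Py4 x p))^2 * (p) + (1/6) * (f x (y x)) * (D 1 0 x (y x)) * (D 1 1 x (y x)) * (D 1 2 x (y x)) * (p)^6 + (1/2) * (f x (y x)) * (D 1 0 x (y x)) * (D 1 2 x (y x)) * (p)^4 + (1/18) * (f x (y x)) * (D 1 1 x (y x)) * (D 1 2 x (y x)) * (D 2 0 x (y x)) * (p)^7 + (1/3) * (f x (y x)) * (D 1 1 x (y x)) * (D 1 2 x (y x)) * ((y (x + p) - y x - Py4 x p)) * (p)^4 + (1/6) * (f x (y x)) * (D 1 1 x (y x)) * (D 2 1 x (y x)) * (p)^5 + (1/3) * (f x (y x)) * (D 1 1 x (y x))^2 * (p)^4 + (1/6) * (f x (y x)) * (D 1 2 x (y x)) * (D 2 0 x (y x)) * (p)^5 + (1) * (f x (y x)) * (D 1 2 x (y x)) * ((y (x + p) - y x - Py4 x p)) * (p)^2 + (1/216) * (f x (y x))^2 * (D 0 1 x (y x)) * (D 0 2 x (y x)) * (D 0 3 x (y x)) * (D 1 0 x (y x)) * (D 2 0 x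 (y x)) * (p)^9 + (1/36) * (f x (y x))^2 * (D 0 1 x (y x)) * (D 0 2 x (y x)) * (D 0 3 x (y x)) * (D 1 0 x (y x)) * ((y (x + p) - y x - Py4 x p)) * (p)^6 + (1/72) * (f x (y x))^2 * (D 0 1 x (y x)) * (D 0 2 x (y x)) * (D 0 3 x (y x)) * (D 1 0 x (y x))^2 * (p)^8 + (1/36) * (f x (y x))^2 * (D 0 1 x (y x)) * (D 0 2 x (y x)) * (D 1 0 x (y x)) * (D 1 2 x (y x)) * (p)^7 + (1/6) * (f x (y x))^2 * (D 0 1 x (y x)) * (D 0 2 x (y x)) * (D 1 1 x (y x)) * (p)^5 + (1/36) * (f x (y x))^2 * (D 0 1 x (y x)) * (D 0 2 x (y x))^2 * (D 1 0 x (y x)) * (p)^6 + (5/36) * (f x (y x))^2 * (D 0 1 x (y x)) * (D 0 3 x (y x)) * (D 1 0 x (y x)) * (D 1 1 x (y x)) * (p)^7 + (1/108) * (f x (y x))^2 * (D 0 1 x (y x)) * (D 0 3 x (y x)) * (D 1 0 x (y x)) * (D 1 1 x (y x))^2 * (p)^9 + (1/3) * (f x (y x))^2 * (D 0 1 x (y x)) * (D 0 3 x (y x)) * (D 1 0 x (y x)) * (p)^5 + (1/36) * (f x (y x))^2 * (D 0 1 x (y x)) * (D 0 3 x (y x)) * (D 1 1 x (y x)) * (D 2 0 x (y x)) * (p)^8 + (1/6) * (f x (y x))^2 * (D 0 1 x (y x)) * (D 0 3 x (y x)) * (D 1 1 x (y x)) * ((y (x + p) - y x - Py4 x p)) * (p)^5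 + (1/12) * (f x (y x))^2 * (D 0 1 x (y x)) * (D 0 3 x (y x)) * (D 2 0 x (y x)) * (p)^6 + (1/2) * (f x (y x))^2 * (D 0 1 x (y x)) * (D 0 3 x (y x)) * ((y (x + p) - y x - Py4 x p)) * (p)^3 + (1/6) * (f x (y x))^2 * (D 0 1 x (y x)) * (D 1 1 x (y x)) * (D 1 2 x (y x)) * (p)^6 + (1/2) * (f x (y x))^2 * (D 0 1 x (y x)) * (D 1 2 x (y x)) * (p)^4 + (1/432) * (f x (y x))^2 * (D 0 1 x (y x))^2 * (D 0 2 x (y x)) * (D 0 3 x (y x)) * (D 1 0 x (y x))^2 * (p)^9 + (1/18) * (f x (y x))^2 * (D 0 1 x (y x))^2 * (D 0 2 x (y x)) * (D 1 1 x (y x)) * (p)^6 + (7/24) * (f x (y x))^2 * (D 0 1 x (y x))^2 * (D 0 2 x (y x)) * (p)^4 + (1/18) * (f x (y x))^2 * (D 0 1 x (y x))^2 * (D 0 3 x (y x)) * (D 1 0 x (y x)) * (D 1 1 x (y x)) * (p)^8 + (11/48) * (f x (y x))^2 * (D 0 1 x (y x))^2 * (D 0 3 x (y x)) * (D 1 0 x (y x)) * (p)^6 + (1/108) * (f x (y x))^2 * (D 0 1 x (y x))^2 * (D 0 3 x (y x)) * (D 1 1 x (y x)) * (D 2 0 x (y x)) * (p)^9 + (1/18) * (f x (y x))^2 * (D 0 1 x (y x))^2 * (D 0 3 x (y x)) * (D 1 1 x (y x)) * ((y (x + p) - y x - Py4 x p)) * (p)^6 + (7/144) * (f x (y x))^2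 * (D 0 1 x (y x))^2 * (D 0 3 x (y x)) * (D 2 0 x (y x)) * (p)^7 + (7/24) * (f x (y x))^2 * (D 0 1 x (y x))^2 * (D 0 3 x (y x)) * ((y (x + p) - y x - Py4 x p)) * (p)^4 + (1/18) * (f x (y x))^2 * (D 0 1 x (y x))^2 * (D 1 1 x (y x)) * (D 1 2 x (y x)) * (p)^7 + (7/24) * (f x (y x))^2 * (D 0 1 x (y x))^2 * (D 1 2 x (y x)) * (p)^5 + (1/12) * (f x (y x))^2 * (D 0 1 x (y x))^3 * (D 0 2 x (y x)) * (p)^5 + (1/108) * (f x (y x))^2 * (D 0 1 x (y x))^3 * (D 0 3 x (y x)) * (D 1 0 x (y x)) * (D 1 1 x (y x)) * (p)^9 + (13/144) * (f x (y x))^2 * (D 0 1 x (y x))^3 * (D 0 3 x (y x)) * (D 1 0 x (y x)) * (p)^7 + (1/72) * (f x (y x))^2 * (D 0 1 x (y x))^3 * (D 0 3 x (y x)) * (D 2 0 x (y x)) * (p)^8 + (1/12) * (f x (y x))^2 * (D 0 1 x (y x))^3 * (D 0 3 x (y x)) * ((y (x + p) - y x - Py4 x p)) * (p)^5 + (1/12) * (f x (y x))^2 * (D 0 1 x (y x))^3 * (D 1 2 x (y x)) * (p)^6 + (1/72) * (f x (y x))^2 * (D 0 1 x (y x))^4 * (D 0 2 x (y x)) * (p)^6 + (1/48) * (f x (y x))^2 * (D 0 1 x (y x))^4 * (D 0 3 x (y x)) * (D 1 0 x (y x)) * (p)^8 + (1/432) * (f x (y x))^2 * (D 0 1 x (y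 x))^4 * (D 0 3 x (y x)) * (D 2 0 x (y x)) * (p)^9 + (1/72) * (f x (y x))^2 * (D 0 1 x (y x))^4 * (D 0 3 x (y x)) * ((y (x + p) - y x - Py4 x p)) * (p)^6 + (1/72) * (f x (y x))^2 * (D 0 1 x (y x))^4 * (D 1 2 x (y x)) * (p)^7 + (1/432) * (f x (y x))^2 * (D 0 1 x (y x))^5 * (D 0 3 x (y x)) * (D 1 0 x (y x)) * (p)^9 + (1/72) * (f x (y x))^2 * (D 0 2 x (y x)) * (D 0 3 x (y x)) * (D 1 0 x (y x)) * (D 2 0 x (y x)) * (p)^8 + (1/12) * (f x (y x))^2 * (D 0 2 x (y x)) * (D 0 3 x (y x)) * (D 1 0 x (y x)) * ((y (x + p) - y x - Py4 x p)) * (p)^5 + (1/48) * (f x (y x))^2 * (D 0 2 x (y x)) * (D 0 3 x (y x)) * (D 1 0 x (y x))^2 * (p)^7 + (1/36) * (f x (y x))^2 * (D 0 2 x (y x)) * (D 0 3 x (y x)) * (D 2 0 x (y x)) * ((y (x + p) - y x - Py4 x p)) * (p)^6 + (1/432) * (f x (y x))^2 * (D 0 2 x (y x)) * (D 0 3 x (y x)) * (D 2 0 x (y x))^2 * (p)^9 + (1/12) * (f x (y x))^2 * (D 0 2 x (y x)) * (D 0 3 x (y x)) * ((y (x + p) - y x - Py4 x p))^2 * (p)^3 + (1/12) * (f x (y x))^2 * (D 0 2 x (y x)) * (D 1 0 x (y x)) * (D 1 2 x (y x)) * (p)^6 + (1/2) * (f x (y x))^2 * (D 0 2 x (y x)) *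 (D 1 1 x (y x)) * (p)^4 + (1/18) * (f x (y x))^2 * (D 0 2 x (y x)) * (D 1 1 x (y x))^2 * (p)^6 + (1/36) * (f x (y x))^2 * (D 0 2 x (y x)) * (D 1 2 x (y x)) * (D 2 0 x (y x)) * (p)^7 + (1/6) * (f x (y x))^2 * (D 0 2 x (y x)) * (D 1 2 x (y x)) * ((y (x + p) - y x - Py4 x p)) * (p)^4 + (1/12) * (f x (y x))^2 * (D 0 2 x (y x)) * (D 2 1 x (y x)) * (p)^5 + (1/12) * (f x (y x))^2 * (D 0 2 x (y x))^2 * (D 1 0 x (y x)) * (p)^5 + (1/36) * (f x (y x))^2 * (D 0 2 x (y x))^2 * (D 2 0 x (y x)) * (p)^6 + (1/6) * (f x (y x))^2 * (D 0 2 x (y x))^2 * ((y (x + p) - y x - Py4 x p)) * (p)^3 + (1/6) * (f x (y x))^2 * (D 0 3 x (y x)) * (D 1 0 x (y x)) * (D 1 1 x (y x)) * (p)^6 + (1/36) * (f x (y x))^2 * (D 0 3 x (y x)) * (D 1 0 x (y x)) * (D 1 1 x (y x))^2 * (p)^8 + (1/4) * (f x (y x))^2 * (D 0 3 x (y x)) * (D 1 0 x (y x)) * (p)^4 + (1/18) * (f x (y x))^2 * (D 0 3 x (y x)) * (D 1 1 x (y x)) * (D 2 0 x (y x)) * (p)^7 + (1/3) * (f x (y x))^2 * (D 0 3 x (y x)) * (D 1 1 x (y x)) * ((y (x + p) - y x - Py4 x p)) * (p)^4 + (1/108) * (f x (y x))^2 * (D 0 3 x (y x)) * (D 1 1 x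 (y x))^2 * (D 2 0 x (y x)) * (p)^9 + (1/18) * (f x (y x))^2 * (D 0 3 x (y x)) * (D 1 1 x (y x))^2 * ((y (x + p) - y x - Py4 x p)) * (p)^6 + (1/12) * (f x (y x))^2 * (D 0 3 x (y x)) * (D 2 0 x (y x)) * (p)^5 + (1/2) * (f x (y x))^2 * (D 0 3 x (y x)) * ((y (x + p) - y x - Py4 x p)) * (p)^2 + (1/3) * (f x (y x))^2 * (D 1 1 x (y x)) * (D 1 2 x (y x)) * (p)^5 + (1/18) * (f x (y x))^2 * (D 1 1 x (y x))^2 * (D 1 2 x (y x)) * (p)^7 + (1/108) * (f x (y x))^3 * (D 0 1 x (y x)) * (D 0 2 x (y x)) * (D 0 3 x (y x)) * (D 1 0 x (y x)) * (D 1 1 x (y x)) * (p)^9 + (5/72) * (f x (y x))^3 * (D 0 1 x (y x)) * (D 0 2 x (y x)) * (D 0 3 x (y x)) * (D 1 0 x (y x)) * (p)^7 + (1/72) * (f x (y x))^3 * (D 0 1 x (y x)) * (D 0 2 x (y x)) * (D 0 3 x (y x)) * (D 2 0 x (y x)) * (p)^8 + (1/12) * (f x (y x))^3 * (D 0 1 x (y x)) * (D 0 2 x (y x)) * (D 0 3 x (y x)) * ((y (x + p) - y x - Py4 x p)) * (p)^5 + (1/12) * (f x (y x))^3 * (D 0 1 x (y x)) * (D 0 2 x (y x)) * (D 1 2 x (y x)) * (p)^6 + (1/12) * (f x (y x))^3 * (D 0 1 x (y x)) * (D 0 2 x (y x))^2 * (p)^5 + (1/6) * (f x (y x))^3 *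 (D 0 1 x (y x)) * (D 0 3 x (y x)) * (D 1 1 x (y x)) * (p)^6 + (1/36) * (f x (y x))^3 * (D 0 1 x (y x)) * (D 0 3 x (y x)) * (D 1 1 x (y x))^2 * (p)^8 + (1/4) * (f x (y x))^3 * (D 0 1 x (y x)) * (D 0 3 x (y x)) * (p)^4 + (1/36) * (f x (y x))^3 * (D 0 1 x (y x))^2 * (D 0 2 x (y x)) * (D 0 3 x (y x)) * (D 1 0 x (y x)) * (p)^8 + (1/216) * (f x (y x))^3 * (D 0 1 x (y x))^2 * (D 0 2 x (y x)) * (D 0 3 x (y x)) * (D 2 0 x (y x)) * (p)^9 + (1/36) * (f x (y x))^3 * (D 0 1 x (y x))^2 * (D 0 2 x (y x)) * (D 0 3 x (y x)) * ((y (x + p) - y x - Py4 x p)) * (p)^6 + (1/36) * (f x (y x))^3 * (D 0 1 x (y x))^2 * (D 0 2 x (y x)) * (D 1 2 x (y x)) * (p)^7 + (1/36) * (f x (y x))^3 * (D 0 1 x (y x))^2 * (D 0 2 x (y x))^2 * (p)^6 + (7/72) * (f x (y x))^3 * (D 0 1 x (y x))^2 * (D 0 3 x (y x)) * (D 1 1 x (y x)) * (p)^7 + (1/108) * (f x (y x))^3 * (D 0 1 x (y x))^2 * (D 0 3 x (y x)) * (D 1 1 x (y x))^2 * (p)^9 + (5/24) * (f x (y x))^3 * (D 0 1 x (y x))^2 * (D 0 3 x (y x)) * (p)^5 + (1/216) * (f x (y x))^3 * (D 0 1 x (y x))^3 * (D 0 2 x (y x)) * (D 0 3 x (y x)) *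 (D 1 0 x (y x)) * (p)^9 + (1/36) * (f x (y x))^3 * (D 0 1 x (y x))^3 * (D 0 3 x (y x)) * (D 1 1 x (y x)) * (p)^8 + (5/48) * (f x (y x))^3 * (D 0 1 x (y x))^3 * (D 0 3 x (y x)) * (p)^6 + (1/216) * (f x (y x))^3 * (D 0 1 x (y x))^4 * (D 0 3 x (y x)) * (D 1 1 x (y x)) * (p)^9 + (5/144) * (f x (y x))^3 * (D 0 1 x (y x))^4 * (D 0 3 x (y x)) * (p)^7 + (1/144) * (f x (y x))^3 * (D 0 1 x (y x))^5 * (D 0 3 x (y x)) * (p)^8 + (1/1296) * (f x (y x))^3 * (D 0 1 x (y x))^6 * (D 0 3 x (y x)) * (p)^9 + (1/36) * (f x (y x))^3 * (D 0 2 x (y x)) * (D 0 3 x (y x)) * (D 1 0 x (y x)) * (D 1 1 x (y x)) * (p)^8 + (1/12) * (f x (y x))^3 * (D 0 2 x (y x)) * (D 0 3 x (y x)) * (D 1 0 x (y x)) * (p)^6 + (1/108) * (f x (y x))^3 * (D 0 2 x (y x)) * (D 0 3 x (y x)) * (D 1 1 x (y x)) * (D 2 0 x (y x)) * (p)^9 + (1/18) * (f x (y x))^3 * (D 0 2 x (y x)) * (D 0 3 x (y x)) * (D 1 1 x (y x)) * ((y (x + p) - y x - Py4 x p)) * (p)^6 + (1/36) * (f x (y x))^3 * (D 0 2 x (y x)) * (D 0 3 x (y x)) * (D 2 0 x (y x)) * (p)^7 + (1/6) * (f x (y x))^3 * (D 0 2 x (y x)) * (D 0 3 x (y x)) * ((y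 (x + p) - y x - Py4 x p)) * (p)^4 + (1/18) * (f x (y x))^3 * (D 0 2 x (y x)) * (D 1 1 x (y x)) * (D 1 2 x (y x)) * (p)^7 + (1/6) * (f x (y x))^3 * (D 0 2 x (y x)) * (D 1 2 x (y x)) * (p)^5 + (1/18) * (f x (y x))^3 * (D 0 2 x (y x))^2 * (D 1 1 x (y x)) * (p)^6 + (1/6) * (f x (y x))^3 * (D 0 2 x (y x))^2 * (p)^4 + (1/6) * (f x (y x))^3 * (D 0 3 x (y x)) * (D 1 1 x (y x)) * (p)^5 + (1/18) * (f x (y x))^3 * (D 0 3 x (y x)) * (D 1 1 x (y x))^2 * (p)^7 + (1/162) * (f x (y x))^3 * (D 0 3 x (y x)) * (D 1 1 x (y x))^3 * (p)^9 + (1/36) * (f x (y x))^4 * (D 0 1 x (y x)) * (D 0 2 x (y x)) * (D 0 3 x (y x)) * (D 1 1 x (y x)) * (p)^8 + (1/12) * (f x (y x))^4 * (D 0 1 x (y x)) * (D 0 2 x (y x)) * (D 0 3 x (y x)) * (p)^6 + (1/432) * (f x (y x))^4 * (D 0 1 x (y x)) * (D 0 2 x (y x))^2 * (D 0 3 x (y x)) * (D 1 0 x (y x)) * (p)^9 + (1/108) * (f x (y x))^4 * (D 0 1 x (y x))^2 * (D 0 2 x (y x)) * (D 0 3 x (y x)) * (D 1 1 x (y x)) * (p)^9 + (7/144) * (f x (y x))^4 * (D 0 1 x (y x))^2 * (D 0 2 x (y x)) * (D 0 3 x (y x)) * (p)^7 + (1/72) * (f x (y x))^4 * (D 0 1 x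 (y x))^3 * (D 0 2 x (y x)) * (D 0 3 x (y x)) * (p)^8 + (1/432) * (f x (y x))^4 * (D 0 1 x (y x))^4 * (D 0 2 x (y x)) * (D 0 3 x (y x)) * (p)^9 + (1/18) * (f x (y x))^4 * (D 0 2 x (y x)) * (D 0 3 x (y x)) * (D 1 1 x (y x)) * (p)^7 + (1/108) * (f x (y x))^4 * (D 0 2 x (y x)) * (D 0 3 x (y x)) * (D 1 1 x (y x))^2 * (p)^9 + (1/12) * (f x (y x))^4 * (D 0 2 x (y x)) * (D 0 3 x (y x)) * (p)^5 + (1/144) * (f x (y x))^4 * (D 0 2 x (y x))^2 * (D 0 3 x (y x)) * (D 1 0 x (y x)) * (p)^8 + (1/432) * (f x (y x))^4 * (D 0 2 x (y x))^2 * (D 0 3 x (y x)) * (D 2 0 x (y x)) * (p)^9 + (1/72) * (f x (y x))^4 * (D 0 2 x (y x))^2 * (D 0 3 x (y x)) * ((y (x + p) - y x - Py4 x p)) * (p)^6 + (1/72) * (f x (y x))^4 * (D 0 2 x (y x))^2 * (D 1 2 x (y x)) * (p)^7 + (1/72) * (f x (y x))^4 * (D 0 2 x (y x))^3 * (p)^6 + (1/144) * (f x (y x))^5 * (D 0 1 x (y x)) * (D 0 2 x (y x))^2 * (D 0 3 x (y x)) * (p)^8 + (1/432) * (f x (y x))^5 * (D 0 1 x (y x))^2 * (D 0 2 x (y x))^2 * (D 0 3 x (y x)) * (p)^9 + (1/216) * (f x (y x))^5 * (D 0 2 x (y x))^2 * (D 0 3 x (y x)) * (D 1 1 x (y x))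 * (p)^9 + (1/72) * (f x (y x))^5 * (D 0 2 x (y x))^2 * (D 0 3 x (y x)) * (p)^7 + (1/1296) * (f x (y x))^6 * (D 0 2 x (y x))^3 * (D 0 3 x (y x)) * (p)^9 + (1/36) * (D 0 1 x (y x)) * (D 0 2 x (y x)) * (D 1 0 x (y x)) * (D 2 0 x (y x)) * (p)^6 + (1/6) * (D 0 1 x (y x)) * (D 0 2 x (y x)) * (D 1 0 x (y x)) * ((y (x + p) - y x - Py4 x p)) * (p)^3 + (1/12) * (D 0 1 x (y x)) * (D 0 2 x (y x)) * (D 1 0 x (y x))^2 * (p)^5 + (1/36) * (D 0 1 x (y x)) * (D 0 3 x (y x)) * (D 1 0 x (y x)) * (D 2 0 x (y x)) * ((y (x + p) - y x - Py4 x p)) * (p)^6 + (1/432) * (D 0 1 x (y x)) * (D 0 3 x (y x)) * (D 1 0 x (y x)) * (D 2 0 x (y x))^2 * (p)^9 + (1/12) * (D 0 1 x (y x)) * (D 0 3 x (y x)) * (D 1 0 x (y x)) * ((y (x + p) - y x - Py4 x p))^2 * (p)^3 + (1/72) * (D 0 1 x (y x)) * (D 0 3 x (y x)) * (D 1 0 x (y x))^2 * (D 2 0 x (y x)) * (p)^8 + (1/12) * (D 0 1 x (y x)) * (D 0 3 x (y x)) * (D 1 0 x (y x))^2 * ((y (x + p) - y x - Py4 x p)) * (p)^5 + (1/48) * (D 0 1 x (y x)) * (D 0 3 x (y x)) * (D 1 0 x (y x))^3 * (p)^7 + (1/6) * (D 0 1 x (y x)) * (D 1 0 x (y x)) * (D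 1 1 x (y x)) * (p)^4 + (1/36) * (D 0 1 x (y x)) * (D 1 0 x (y x)) * (D 1 2 x (y x)) * (D 2 0 x (y x)) * (p)^7 + (1/6) * (D 0 1 x (y x)) * (D 1 0 x (y x)) * (D 1 2 x (y x)) * ((y (x + p) - y x - Py4 x p)) * (p)^4 + (1/12) * (D 0 1 x (y x)) * (D 1 0 x (y x)) * (D 2 1 x (y x)) * (p)^5 + (1/12) * (D 0 1 x (y x)) * (D 1 0 x (y x))^2 * (D 1 2 x (y x)) * (p)^6 + (1) * (D 0 1 x (y x)) * ((y (x + p) - y x - Py4 x p)) + (1/72) * (D 0 1 x (y x))^2 * (D 0 2 x (y x)) * (D 1 0 x (y x))^2 * (p)^6 + (1/432) * (D 0 1 x (y x))^2 * (D 0 3 x (y x)) * (D 1 0 x (y x))^2 * (D 2 0 x (y x)) * (p)^9 + (1/72) * (D 0 1 x (y x))^2 * (D 0 3 x (y x)) * (D 1 0 x (y x))^2 * ((y (x + p) - y x - Py4 x p)) * (p)^6 + (1/144) * (D 0 1 x (y x))^2 * (D 0 3 x (y x)) * (D 1 0 x (y x))^3 * (p)^8 + (1/72) * (D 0 1 x (y x))^2 * (D 1 0 x (y x))^2 * (D 1 2 x (y x)) * (p)^7 + (1/1296) * (D 0 1 x (y x))^3 * (D 0 3 x (y x)) * (D 1 0 x (y x))^3 * (p)^9 + (1/12) * (D 0 2 x (y x)) * (D 1 0 x (y x)) * (D 2 0 x (y x)) * (p)^5 + (1/2) * (D 0 2 x (y x)) * (D 1 0 x (y x)) * ((y (x +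 p) - y x - Py4 x p)) * (p)^2 + (1/8) * (D 0 2 x (y x)) * (D 1 0 x (y x))^2 * (p)^4 + (1/6) * (D 0 2 x (y x)) * (D 2 0 x (y x)) * ((y (x + p) - y x - Py4 x p)) * (p)^3 + (1/72) * (D 0 2 x (y x)) * (D 2 0 x (y x))^2 * (p)^6 + (1/2) * (D 0 2 x (y x)) * ((y (x + p) - y x - Py4 x p))^2 + (1/12) * (D 0 3 x (y x)) * (D 1 0 x (y x)) * (D 2 0 x (y x)) * ((y (x + p) - y x - Py4 x p)) * (p)^5 + (1/144) * (D 0 3 x (y x)) * (D 1 0 x (y x)) * (D 2 0 x (y x))^2 * (p)^8 + (1/4) * (D 0 3 x (y x)) * (D 1 0 x (y x)) * ((y (x + p) - y x - Py4 x p))^2 * (p)^2 + (1/48) * (D 0 3 x (y x)) * (D 1 0 x (y x))^2 * (D 2 0 x (y x)) * (p)^7 + (1/8) * (D 0 3 x (y x)) * (D 1 0 x (y x))^2 * ((y (x + p) - y x - Py4 x p)) * (p)^4 + (1/48) * (D 0 3 x (y x)) * (D 1 0 x (y x))^3 * (p)^6 + (1/12) * (D 0 3 x (y x)) * (D 2 0 x (y x)) * ((y (x + p) - y x - Py4 x p))^2 * (p)^3 + (1/72) * (D 0 3 x (y x)) * (D 2 0 x (y x))^2 * ((y (x + p) - y x - Py4 x p)) * (p)^6 + (1/1296) * (D 0 3 x (y x)) * (D 2 0 x (y x))^3 * (p)^9 + (1/6) * (D 0 3 x (y x)) * ((y (x + p) - y x - Py4 x p))^3 + (1/12) * (D 1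 0 x (y x)) * (D 1 2 x (y x)) * (D 2 0 x (y x)) * (p)^6 + (1/2) * (D 1 0 x (y x)) * (D 1 2 x (y x)) * ((y (x + p) - y x - Py4 x p)) * (p)^3 + (1/4) * (D 1 0 x (y x)) * (D 2 1 x (y x)) * (p)^4 + (1/8) * (D 1 0 x (y x))^2 * (D 1 2 x (y x)) * (p)^5 + (1/6) * (D 1 1 x (y x)) * (D 2 0 x (y x)) * (p)^4 + (1) * (D 1 1 x (y x)) * ((y (x + p) - y x - Py4 x p)) * (p) + (1/6) * (D 1 2 x (y x)) * (D 2 0 x (y x)) * ((y (x + p) - y x - Py4 x p)) * (p)^4 + (1/72) * (D 1 2 x (y x)) * (D 2 0 x (y x))^2 * (p)^7 + (1/2) * (D 1 2 x (y x)) * ((y (x + p) - y x - Py4 x p))^2 * (p) + (1/12) * (D 2 0 x (y x)) * (D 2 1 x (y x)) * (p)^5 + (1/2) * (D 2 1 x (y x)) * ((y (x + p) - y x - Py4 x p)) * (p)^2))).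
  - intros x p _ _ _. unfold Pd4, Py4, T2. simpl. rewrite ?HD0. field.
  - ordN.
Qed.

Lemma boot4 : ord a b 5 (fun x p => y (x + p) - y x - Py5 x p).
Proof.
  apply (boot 4 Py5 Pd4 lev4).
  - intros x p. unfold Py5, Pd4. auto_derive; [exact I| field].
  - intros x. unfold Py5. ring.
Qed.
Definition K2 (x p : R) : R := p * f (x + p / 2) (y x + p * f x (y x) / 2).
Definition Rk2 (x p : R) : R :=
  f (x + p / 2) (y x + p * f x (y x) / 2) - T2 D 3 x (y x) (p / 2) (p * f x (y x) / 2).
Definition Rk3 (x p : R) : R :=
  f (x + 3 * p / 4) (y x + 3 * K2 x p / 4) - T2 D 3 x (y x) (3 * p / 4) (3 * K2 x p / 4).

Lemma ordRk2 : ord a b 3 (fun x p => Rk2 x p).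
Proof.
  pose proof M0 as HM.
  eapply ord_ext; [| apply (taylor2d_ord 3 (fun x p => p / 2) (fun x p => p * f x (y x) / 2) (1 + M))].
  - intros x p _ _ _. reflexivity.
  - lia.
  - lra.
  - intros x p Hx Hp Hxp. assert (Hf : Rabs (f x (y x)) <= M) by (apply fbnd; split; lra).
    split; [lra| split; [lra|]].
    revert Hf. unfold Rabs; destruct Rcase_abs; destruct Rcase_abs; intros; nra.
Qed.

Lemma ordRk3 : ord a b 3 (fun x p => Rk3 x p).
Proof.
  pose proof M0 as HM.
  eapply ord_ext; [| apply (taylor2d_ord 3 (fun x p => 3 * p / 4) (fun x p => 3 * K2 x p / 4) (1 + M))].
  - intros x p _ _ _. reflexivity.
  - lia.
  - lra.
  - intros x p Hx Hp Hxp.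
    assert (Hf : Rabs (f (x + p / 2) (y x + p * f x (y x) / 2)) <= M) by (apply fbnd; split; lra).
    split; [lra| split; [lra|]]. unfold K2.
    revert Hf. unfold Rabs; destruct Rcase_abs; destruct Rcase_abs; intros; nra.
Qed.

Lemma rk3_loc : ord a b 4 (fun x p => rk3_step f x (y x) p - y (x + p)).
Proof.
  pose proof boot3 as HE. pose proof ordRk2 as H2. pose proof ordRk3 as H3.
  apply (ord_ext a b 4 (fun x p => (-1) * ((y (x + p) - y x - Py4 x p)) + (1/16) * (f x (y x)) * (D 0 1 x (y x)) * (D 0 2 x (y x)) * (D 1 0 x (y x)) * (p)^5 + (1/64) * (f x (y x)) * (D 0 1 x (y x)) * (D 0 2 x (y x)) * (D 2 0 x (y x)) * (p)^6 + (1/8) * (f x (y x)) * (D 0 1 x (y x)) * (D 0 2 x (y x)) * (Rk2 x p) * (p)^4 + (5/24) * (f x (y x)) * (D 0 1 x (y x)) * (D 1 1 x (y x)) * (p)^4 + (1/32) * (f x (y x)) * (D 0 2 x (y x)) * (D 1 0 x (y x)) * (D 1 1 x (y x)) * (p)^6 + (1/8) * (f x (y x)) * (D 0 2 x (y x)) * (D 1 0 x (y x)) * (p)^4 + (1/128) * (f x (y x)) * (D 0 2 x (y x)) * (D 1 1 x (y x)) * (D 2 0 x (y x)) * (p)^7 + (1/16) * (f x (y x)) * (D 0 2 x (y x)) * (D 1 1 x (y x)) * (Rk2 x p) * (p)^5 + (1/32) * (f x (y x)) * (D 0 2 x (y x)) * (D 2 0 x (y x)) * (p)^5 + (1/4)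 * (f x (y x)) * (D 0 2 x (y x)) * (Rk2 x p) * (p)^3 + (1/16) * (f x (y x)) * (D 1 1 x (y x))^2 * (p)^5 + (1/32) * (f x (y x))^2 * (D 0 1 x (y x)) * (D 0 2 x (y x)) * (D 1 1 x (y x)) * (p)^6 + (1/6) * (f x (y x))^2 * (D 0 1 x (y x)) * (D 0 2 x (y x)) * (p)^4 + (1/32) * (f x (y x))^2 * (D 0 1 x (y x))^2 * (D 0 2 x (y x)) * (p)^5 + (3/32) * (f x (y x))^2 * (D 0 2 x (y x)) * (D 1 1 x (y x)) * (p)^5 + (1/128) * (f x (y x))^2 * (D 0 2 x (y x)) * (D 1 1 x (y x))^2 * (p)^7 + (1/64) * (f x (y x))^2 * (D 0 2 x (y x))^2 * (D 1 0 x (y x)) * (p)^6 + (1/256) * (f x (y x))^2 * (D 0 2 x (y x))^2 * (D 2 0 x (y x)) * (p)^7 + (1/32) * (f x (y x))^2 * (D 0 2 x (y x))^2 * (Rk2 x p) * (p)^5 + (1/64) * (f x (y x))^3 * (D 0 1 x (y x)) * (D 0 2 x (y x))^2 * (p)^6 + (1/128) * (f x (y x))^3 * (D 0 2 x (y x))^2 * (D 1 1 x (y x)) * (p)^7 + (1/32) * (f x (y x))^3 * (D 0 2 x (y x))^2 * (p)^5 + (1/512) * (f x (y x))^4 * (D 0 2 x (y x))^3 * (p)^7 + (1/24) * (D 0 1 x (y x)) * (D 2 0 x (y x)) * (p)^4 + (1/3) * (D 0 1 x (y x)) * (Rk2 x p) * (p)^2 + (1/64) * (D 0 2 x (y x))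 * (D 1 0 x (y x)) * (D 2 0 x (y x)) * (p)^6 + (1/8) * (D 0 2 x (y x)) * (D 1 0 x (y x)) * (Rk2 x p) * (p)^4 + (1/32) * (D 0 2 x (y x)) * (D 1 0 x (y x))^2 * (p)^5 + (1/32) * (D 0 2 x (y x)) * (D 2 0 x (y x)) * (Rk2 x p) * (p)^5 + (1/512) * (D 0 2 x (y x)) * (D 2 0 x (y x))^2 * (p)^7 + (1/8) * (D 0 2 x (y x)) * (Rk2 x p)^2 * (p)^3 + (1/8) * (D 1 0 x (y x)) * (D 1 1 x (y x)) * (p)^4 + (1/32) * (D 1 1 x (y x)) * (D 2 0 x (y x)) * (p)^5 + (1/4) * (D 1 1 x (y x)) * (Rk2 x p) * (p)^3 + (1/3) * (Rk2 x p) * (p) + (4/9) * (Rk3 x p) * (p))).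
  - intros x p _ _ _. unfold rk3_step, Rk2, Rk3, K2, Py4, T2. simpl. rewrite ?HD0. field.
  - ordN.
Qed.

End Main.
From Stdlib Require Import Reals Lra Lia Factorial.
From Coquelicot Require Import Coquelicot.
Open Scope R_scope.

Section E.
Variables (a b M : R) (f : R -> R -> R) (y : R -> R) (D : nat -> nat -> R -> R -> R).
Hypothesis Hab : a < b.
Hypothesis HD0 : forall x z, D O O x z = f x z.
Hypothesis Hder : forall i j x z, (i + j < 4)%nat -> a <= x <= b ->
        is_derive (fun t => D i j t z) x (D (S i) j x z) /\
        is_derive (fun t => D i j x t) z (D i (S j) x z).
Hypothesis Hbnd : forall i j x z, (i + j <= 4)%nat -> a <= x <= b -> Rabs (D i j x z) <= M.
Hypothesis Hy : forall x, a <= x <= b -> is_derive y x (f x (y x)).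

Let HM : 0 <= M := M0 a b M D Hab Hbnd.

Lemma flip x u v : a <= x <= b -> Rabs (f x u - f x v) <= M * Rabs (u - v).
Proof.
  intros Hx.
  pose proof (mvt_bound (fun t => f x t) (fun t => D 0 1 x t) v (u - v) M 0 HM) as H.
  replace (v + (u - v)) with u in H by ring. simpl pow in H. rewrite !Rmult_1_r in H. apply H.
  - intros t _. apply (is_derive_ext (fun t => D 0 0 x t)). { intros; apply HD0. }
    apply (Hder 0 0 x t); [lia| auto].
  - intros t _. apply Hbnd; [lia| auto].
Qed.

Definition A0 := 1 + (b - a) * M.
Definition Lr := 1 + A0 + A0 * (1 + A0) + A0 * (1 + A0 * (1 + A0)).

Lemma A0pos : 1 <= A0.
Proof. unfold A0. pose proof HM. assert (0 <= (b - a) * M) by (apply Rmult_le_pos; lra). lra. Qed.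

Lemma step_lip t eta U V : a <= t <= b -> 0 <= eta <= b - a ->
  Rabs (eta * f t U - eta * f t V) <= A0 * Rabs (U - V).
Proof.
  intros Ht He. rewrite <- Rmult_minus_distr_l, Rabs_mult, (Rabs_pos_eq eta) by lra.
  pose proof (flip t U V Ht). pose proof (Rabs_pos (U - V)). pose proof (Rabs_pos (f t U - f t V)).
  unfold A0. apply Rle_trans with (eta * (M * Rabs (U - V))).
  - apply Rmult_le_compat_l; lra.
  - assert (eta * M <= (b - a) * M) by (apply Rmult_le_compat_r; lra). nra.
Qed.

Lemma abs4 A1 B1 C1 E1 c1 c2 c3 : 0 <= c1 -> 0 <= c2 -> 0 <= c3 ->
  Rabs (A1 + c1 * B1 + c2 * C1 + c3 * E1) <= Rabs A1 + c1 * Rabs B1 + c2 * Rabs C1 + c3 * Rabs E1.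
Proof.
  intros. eapply Rle_trans; [apply Rabs_triang|]. rewrite (Rabs_mult c3), (Rabs_pos_eq c3) by auto.
  apply Rplus_le_compat_r. eapply Rle_trans; [apply Rabs_triang|]. rewrite (Rabs_mult c2), (Rabs_pos_eq c2) by auto.
  apply Rplus_le_compat_r. eapply Rle_trans; [apply Rabs_triang|]. rewrite (Rabs_mult c1), (Rabs_pos_eq c1) by auto.
  lra.
Qed.

Lemma rk3_lip x eta u v : a <= x -> 0 <= eta -> x + eta <= b ->
  Rabs (rk3_step f x u eta - rk3_step f x v eta) <= Lr * Rabs (u - v).
Proof.
  intros Hx He Hxe. unfold rk3_step. cbv zeta.
  set (d := Rabs (u - v)).
  set (k1 := eta * f x u). set (k1' := eta * f x v).
  set (k2 := eta * f (x + eta / 2) (u + k1 / 2)). set (k2' := eta * f (x + eta / 2) (v + k1' / 2)).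
  set (k3 := eta * f (x + 3 * eta / 4) (u + 3 * k2 / 4)).
  set (k3' := eta * f (x + 3 * eta / 4) (v + 3 * k2' / 4)).
  assert (He' : 0 <= eta <= b - a) by lra.
  assert (H1 : Rabs (k1 - k1') <= A0 * d) by (apply step_lip; [split; lra| auto]).
  assert (H2 : Rabs (k2 - k2') <= A0 * (d + Rabs (k1 - k1'))).
  { eapply Rle_trans; [apply step_lip; [split; lra| auto]|].
    apply Rmult_le_compat_l; [pose proof A0pos; lra|].
    replace (u + k1 / 2 - (v + k1' / 2)) with ((u - v) + (k1 - k1') / 2) by field.
    eapply Rle_trans; [apply Rabs_triang|]. unfold d. apply Rplus_le_compat_l.
    unfold Rdiv. rewrite Rabs_mult, (Rabs_pos_eq (/2)) by lra. pose proof (Rabs_pos (k1 - k1')). lra. }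
  assert (H3 : Rabs (k3 - k3') <= A0 * (d + Rabs (k2 - k2'))).
  { eapply Rle_trans; [apply step_lip; [split; lra| auto]|].
    apply Rmult_le_compat_l; [pose proof A0pos; lra|].
    replace (u + 3 * k2 / 4 - (v + 3 * k2' / 4)) with ((u - v) + (k2 - k2') * (3 / 4)) by field.
    eapply Rle_trans; [apply Rabs_triang|]. unfold d. apply Rplus_le_compat_l.
    rewrite Rabs_mult, (Rabs_pos_eq (3/4)) by lra. pose proof (Rabs_pos (k2 - k2')). lra. }
  replace (u + 2 / 9 * k1 + 3 / 9 * k2 + 4 / 9 * k3 - (v + 2 / 9 * k1' + 3 / 9 * k2' + 4 / 9 * k3'))
    with ((u - v) + (2/9) * (k1 - k1') + (3/9) * (k2 - k2') + (4/9) * (k3 - k3')) by ring.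
  assert (Hd : 0 <= d) by apply Rabs_pos.
  pose proof A0pos as HA.
  assert (G1 : Rabs (k2 - k2') <= A0 * (1 + A0) * d).
  { eapply Rle_trans; [exact H2|]. assert (A0 * Rabs (k1 - k1') <= A0 * (A0 * d)) by (apply Rmult_le_compat_l; lra). nra. }
  assert (G2 : Rabs (k3 - k3') <= A0 * (1 + A0 * (1 + A0)) * d).
  { eapply Rle_trans; [exact H3|]. assert (A0 * Rabs (k2 - k2') <= A0 * (A0 * (1 + A0) * d)) by (apply Rmult_le_compat_l; lra). nra. }
  eapply Rle_trans; [apply abs4; lra|].
  unfold Lr. fold d.
  pose proof (Rabs_pos (k1 - k1')). pose proof (Rabs_pos (k2 - k2')). pose proof (Rabs_pos (k3 - k3')).
  nra.
Qed.


Lemma s3 : 0 < 1 / sqrt 3 /\ 1 / sqrt 3 < 1 /\ (1 / sqrt 3) * (1 / sqrt 3) = 1 / 3.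
Proof.
  assert (H3 : sqrt 3 * sqrt 3 = 3) by (apply sqrt_sqrt; lra).
  assert (Hp : 0 < sqrt 3) by (apply sqrt_lt_R0; lra).
  assert (H1 : 1 < sqrt 3) by nra.
  split; [apply Rdiv_lt_0_compat; lra|]. split.
  - apply Rmult_lt_reg_r with (sqrt 3); auto. unfold Rdiv. rewrite Rmult_assoc, Rinv_l by lra. lra.
  - replace (1 / sqrt 3 * (1 / sqrt 3)) with (1 / (sqrt 3 * sqrt 3)) by (field; lra). rewrite H3. reflexivity.
Qed.

Definition Kb := 3 / 2 * M * Lr * (1 + Lr).

Lemma Lr_pos : 1 <= Lr.
Proof. unfold Lr. pose proof A0pos. nra. Qed.

Lemma block_stab x h u v : a <= x -> 0 <= h -> x + 3 * h <= b ->
  Rabs (rk3gl2_block f x h u - rk3gl2_block f x h v) <= (1 + Kb * h) * Rabs (u - v).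
Proof.
  intros Hx Hh Hxh. destruct s3 as [Hs0 [Hs1 Hs2]].
  unfold rk3gl2_block. cbv zeta.
  set (x1 := gl_node1 x h). set (x2 := gl_node2 x h).
  assert (E1 : x1 = x + (3 * h / 2) * (1 - 1 / sqrt 3)) by reflexivity.
  assert (E2 : x2 = x + (3 * h / 2) * (1 + 1 / sqrt 3)) by reflexivity.
  assert (O1 : x <= x1 <= x2) by (split; nra).
  assert (O2 : x2 <= x + 3 * h) by nra.
  set (w1 := rk3_step f x u (x1 - x)). set (w1' := rk3_step f x v (x1 - x)).
  set (w2 := rk3_step f x1 w1 (x2 - x1)). set (w2' := rk3_step f x1 w1' (x2 - x1)).
  set (d := Rabs (u - v)).
  pose proof Lr_pos as HL.
  assert (D1 : Rabs (w1 - w1') <= Lr * d) by (apply rk3_lip; lra).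
  assert (D2 : Rabs (w2 - w2') <= Lr * (Lr * d)).
  { eapply Rle_trans; [apply rk3_lip; lra|]. apply Rmult_le_compat_l; lra. }
  assert (F1 : Rabs (f x1 w1 - f x1 w1') <= M * (Lr * d)).
  { eapply Rle_trans; [apply flip; lra|]. apply Rmult_le_compat_l; lra. }
  assert (F2 : Rabs (f x2 w2 - f x2 w2') <= M * (Lr * (Lr * d))).
  { eapply Rle_trans; [apply flip; lra|]. apply Rmult_le_compat_l; lra. }
  replace (u + 3 * h / 2 * (f x1 w1 + f x2 w2) - (v + 3 * h / 2 * (f x1 w1' + f x2 w2')))
    with ((u - v) + (3 * h / 2) * (f x1 w1 - f x1 w1') + (3 * h / 2) * (f x2 w2 - f x2 w2') + 0 * 0) by ring.
  eapply Rle_trans; [apply abs4; lra|]. fold d.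
  unfold Kb. nra.
Qed.

Definition cq0 (x : R) : R := (1) * (f x (y x)).
Definition cq1 (x : R) : R := (1) * (f x (y x)) * (D 0 1 x (y x)) + (1) * (D 1 0 x (y x)).
Definition cq2 (x : R) : R := (1/2) * (f x (y x)) * (D 0 1 x (y x))^2 + (1) * (f x (y x)) * (D 1 1 x (y x)) + (1/2) * (f x (y x))^2 * (D 0 2 x (y x)) + (1/2) * (D 0 1 x (y x)) * (D 1 0 x (y x)) + (1/2) * (D 2 0 x (y x)).
Definition cq3 (x : R) : R := (5/6) * (f x (y x)) * (D 0 1 x (y x)) * (D 1 1 x (y x)) + (1/6) * (f x (y x)) * (D 0 1 x (y x))^3 + (1/2) * (f x (y x)) * (D 0 2 x (y x)) * (D 1 0 x (y x)) + (1/2) * (f x (y x)) * (D 2 1 x (y x)) + (2/3) * (f x (y x))^2 * (D 0 1 x (y x)) * (D 0 2 x (y x)) + (1/2) * (f x (y x))^2 * (D 1 2 x (y x)) + (1/6) * (f x (y x))^3 * (D 0 3 x (y x)) + (1/6) * (D 0 1 x (y x)) * (D 2 0 x (y x)) + (1/6) * (D 0 1 x (y x))^2 * (D 1 0 x (y x)) + (1/2) * (D 1 0 x (y x)) * (D 1 1 x (y x)) + (1/6) * (D 3 0 x (y x)).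

Lemma Pd4_eq x p : Pd4 f y D x p = cq0 x + cq1 x * p + cq2 x * p ^ 2 + cq3 x * p ^ 3.
Proof. unfold Pd4, cq0, cq1, cq2, cq3. field. Qed.

Lemma Py5_eq x p : Py5 f y D x p = cq0 x * p + cq1 x * p ^ 2 / 2 + cq2 x * p ^ 3 / 3 + cq3 x * p ^ 4 / 4.
Proof. unfold Py5, cq0, cq1, cq2, cq3. field. Qed.

Lemma gl_exact c0 c1 c2 c3 h s : s * s = 1 / 3 ->
  let q1 := 3 * h / 2 * (1 - s) in let q2 := 3 * h / 2 * (1 + s) in
  3 * h / 2 * ((c0 + c1 * q1 + c2 * q1 ^ 2 + c3 * q1 ^ 3) + (c0 + c1 * q2 + c2 * q2 ^ 2 + c3 * q2 ^ 3))
  = c0 * (3 * h) + c1 * (3 * h) ^ 2 / 2 + c2 * (3 * h) ^ 3 / 3 + c3 * (3 * h) ^ 4 / 4.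
Proof.
  intros Hs q1 q2. unfold q1, q2.
  apply Rminus_diag_uniq.
  transitivity ((s * s - 1 / 3) * (2 * (3 * h / 2) ^ 3 * c2 + 6 * (3 * h / 2) ^ 4 * c3)).
  - field.
  - rewrite Hs. ring.
Qed.

Lemma ord_get n u : ord a b n u -> exists K, 0 <= K /\ forall x p, a <= x -> 0 <= p -> x + p <= b -> Rabs (u x p) <= K * p ^ n.
Proof. auto. Qed.

Lemma block_local : exists C, 0 <= C /\ forall x h, a <= x -> 0 <= h -> x + 3 * h <= b ->
  Rabs (rk3gl2_block f x h (y x) - y (x + 3 * h)) <= C * h ^ 5.
Proof.
  destruct (rk3_loc a b M f y D Hab HD0 Hder Hbnd Hy) as [K1 [HK1 R1]].
  destruct (lev4 a b M f y D Hab HD0 Hder Hbnd Hy) as [K2 [HK2 R2]].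
  destruct (boot4 a b M f y D Hab HD0 Hder Hbnd Hy) as [K3 [HK3 R3]].
  pose proof Lr_pos as HL.
  exists (3 * 81 * K2 + 243 * K3 + 3 / 2 * M * (Lr + 2) * 81 * K1). split.
  { assert (0 <= M * (Lr + 2) * K1) by (apply Rmult_le_pos; [apply Rmult_le_pos|]; lra). nra. }
  intros x h Hx Hh Hxh. destruct s3 as [Hs0 [Hs1 Hs2]].
  unfold rk3gl2_block. cbv zeta.
  set (s := 1 / sqrt 3) in *.
  set (p1 := 3 * h / 2 * (1 - s)). set (p2 := 3 * h / 2 * (1 + s)).
  assert (E1 : gl_node1 x h = x + p1) by reflexivity.
  assert (E2 : gl_node2 x h = x + p2) by reflexivity.
  rewrite E1, E2.
  assert (P1 : 0 <= p1 <= 3 * h) by (unfold p1; split; nra).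
  assert (P2 : 0 <= p2 <= 3 * h) by (unfold p2; split; nra).
  assert (P12 : p1 <= p2) by (unfold p1, p2; nra).
  assert (Pw : forall q, 0 <= q <= 3 * h -> q ^ 4 <= 81 * h ^ 4).
  { intros q Hq. replace (81 * h ^ 4) with ((3 * h) ^ 4) by ring. apply pow_incr. lra. }
  set (x1 := x + p1). set (x2 := x + p2).
  set (w1 := rk3_step f x (y x) (x1 - x)).
  set (w2 := rk3_step f x1 w1 (x2 - x1)).
  assert (e1 : Rabs (w1 - y x1) <= K1 * (81 * h ^ 4)).
  { specialize (R1 x (x1 - x) Hx ltac:(unfold x1; lra) ltac:(unfold x1; lra)).
    replace (x + (x1 - x)) with x1 in R1 by ring. eapply Rle_trans; [exact R1|].
    apply Rmult_le_compat_l; auto. apply Pw. unfold x1. split; lra. }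
  assert (e2 : Rabs (w2 - y x2) <= (Lr + 1) * K1 * (81 * h ^ 4)).
  { specialize (R1 x1 (x2 - x1) ltac:(unfold x1; lra) ltac:(unfold x1, x2; lra) ltac:(unfold x2; lra)).
    replace (x1 + (x2 - x1)) with x2 in R1 by ring.
    assert (L : Rabs (w2 - rk3_step f x1 (y x1) (x2 - x1)) <= Lr * Rabs (w1 - y x1)).
    { apply rk3_lip; unfold x1, x2; lra. }
    replace (w2 - y x2) with ((w2 - rk3_step f x1 (y x1) (x2 - x1)) + (rk3_step f x1 (y x1) (x2 - x1) - y x2)) by ring.
    eapply Rle_trans; [apply Rabs_triang|].
    assert (K1 * (x2 - x1) ^ 4 <= K1 * (81 * h ^ 4)).
    { apply Rmult_le_compat_l; auto. apply Pw. unfold x1, x2. split; lra. }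
    assert (Lr * Rabs (w1 - y x1) <= Lr * (K1 * (81 * h ^ 4))) by (apply Rmult_le_compat_l; lra).
    lra. }
  assert (q1 : Rabs (f x1 (y x1) - Pd4 f y D x p1) <= K2 * (81 * h ^ 4)).
  { eapply Rle_trans; [apply R2; unfold x1; lra|]. apply Rmult_le_compat_l; auto. }
  assert (q2 : Rabs (f x2 (y x2) - Pd4 f y D x p2) <= K2 * (81 * h ^ 4)).
  { eapply Rle_trans; [apply R2; unfold x2; lra|]. apply Rmult_le_compat_l; auto. }
  assert (q0 : Rabs (y (x + 3 * h) - y x - Py5 f y D x (3 * h)) <= K3 * (243 * h ^ 5)).
  { eapply Rle_trans; [apply R3; lra|]. right. ring. }
  assert (GL : 3 * h / 2 * (Pd4 f y D x p1 + Pd4 f y D x p2) = Py5 f y D x (3 * h)).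
  { rewrite !Pd4_eq, Py5_eq. apply (gl_exact _ _ _ _ h s Hs2). }
  assert (F1 : Rabs (f x1 w1 - f x1 (y x1)) <= M * Rabs (w1 - y x1)) by (apply flip; unfold x1; lra).
  assert (F2 : Rabs (f x2 w2 - f x2 (y x2)) <= M * Rabs (w2 - y x2)) by (apply flip; unfold x2; lra).
  replace (y x + 3 * h / 2 * (f x1 w1 + f x2 w2) - y (x + 3 * h)) with
    ((3 * h / 2) * (f x1 w1 - f x1 (y x1)) + (3 * h / 2) * (f x2 w2 - f x2 (y x2))
     + (3 * h / 2) * (f x1 (y x1) - Pd4 f y D x p1) + (3 * h / 2) * (f x2 (y x2) - Pd4 f y D x p2)
     - (y (x + 3 * h) - y x - Py5 f y D x (3 * h))).
  2:{ rewrite <- GL. ring. }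
  set (c := 3 * h / 2). assert (Hc : 0 <= c) by (unfold c; lra).
  set (A1 := f x1 w1 - f x1 (y x1)) in *. set (A2 := f x2 w2 - f x2 (y x2)) in *.
  set (B1 := f x1 (y x1) - Pd4 f y D x p1) in *. set (B2 := f x2 (y x2) - Pd4 f y D x p2) in *.
  set (B0 := y (x + 3 * h) - y x - Py5 f y D x (3 * h)) in *.
  assert (T : Rabs (c * A1 + c * A2 + c * B1 + c * B2 - B0) <=
     c * Rabs A1 + c * Rabs A2 + c * Rabs B1 + c * Rabs B2 + Rabs B0).
  { unfold Rminus. eapply Rle_trans; [apply Rabs_triang|]. rewrite Rabs_Ropp.
    apply Rplus_le_compat_r. replace (c * A1 + c * A2 + c * B1 + c * B2) with (0 + c * A1 + c * A2 + c * (B1 + B2)) by ring.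
    eapply Rle_trans; [apply abs4; lra|]. rewrite Rabs_R0.
    pose proof (Rabs_triang B1 B2). nra. }
  eapply Rle_trans; [exact T|].
  assert (G1 : Rabs A1 <= M * (K1 * (81 * h ^ 4))).
  { eapply Rle_trans; [exact F1|]. apply Rmult_le_compat_l; lra. }
  assert (G2 : Rabs A2 <= M * ((Lr + 1) * K1 * (81 * h ^ 4))).
  { eapply Rle_trans; [exact F2|]. apply Rmult_le_compat_l; lra. }
  assert (Hh4 : 0 <= h ^ 4) by (apply pow_le; lra).
  assert (c * Rabs A1 <= c * (M * (K1 * (81 * h ^ 4)))) by (apply Rmult_le_compat_l; lra).
  assert (c * Rabs A2 <= c * (M * ((Lr + 1) * K1 * (81 * h ^ 4)))) by (apply Rmult_le_compat_l; lra).
  assert (c * Rabs B1 <= c * (K2 * (81 * h ^ 4))) by (apply Rmult_le_compat_l; lra).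
  assert (c * Rabs B2 <= c * (K2 * (81 * h ^ 4))) by (apply Rmult_le_compat_l; lra).
  unfold c in *. simpl pow in *. nra.
Qed.

Lemma pow_exp t N : 0 <= t -> (1 + t) ^ N <= exp (INR N * t).
Proof.
  intros Ht. induction N.
  - simpl. rewrite Rmult_0_l, exp_0. lra.
  - rewrite S_INR. replace ((INR N + 1) * t) with (t + INR N * t) by ring. rewrite exp_plus.
    simpl. apply Rmult_le_compat.
    + lra.
    + apply pow_le; lra.
    + destruct (Req_dec t 0) as [->|Hn]; [rewrite exp_0; lra| left; apply exp_ineq1; auto].
    + exact IHN.
Qed.

Lemma Kb_pos : 0 <= Kb.
Proof. unfold Kb. pose proof Lr_pos. pose proof HM. assert (0 <= M * Lr) by nra. nra. Qed.

Lemma global : exists C, forall N : nat, (0 < N)%nat ->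
  let h := (b - a) / (3 * INR N) in
  Rabs (rk3gl2_w f a h (y a) N - y b) <= C * h ^ 4.
Proof.
  destruct block_local as [Cl [HCl Hloc]].
  pose proof Kb_pos as HKb.
  exists (exp (Kb * ((b - a) / 3)) * Cl * ((b - a) / 3)).
  intros N HN h.
  assert (HNr : 0 < INR N) by (apply lt_0_INR; lia).
  assert (Hh : 0 < h) by (unfold h; apply Rdiv_lt_0_compat; lra).
  assert (HNh : 3 * INR N * h = b - a) by (unfold h; field; lra).
  clearbody h.
  assert (Ind : forall k, (k <= N)%nat ->
    Rabs (rk3gl2_w f a h (y a) k - y (a + 3 * INR k * h)) <= INR k * (1 + Kb * h) ^ k * Cl * h ^ 5).
  { induction k; intros Hk.
    - simpl. replace (a + 3 * 0 * h) with a by ring. rewrite Rminus_diag, Rabs_R0. lra.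
    - assert (HkN : INR (S k) <= INR N) by (apply le_INR; lia).
      rewrite S_INR in HkN.
      assert (Hk0 : 0 <= INR k) by apply pos_INR.
      specialize (IHk ltac:(lia)).
      set (xk := a + 3 * INR k * h) in *.
      assert (Hxk : a <= xk) by (unfold xk; nra).
      assert (Hxk3 : xk + 3 * h <= b) by (unfold xk; nra).
      simpl rk3gl2_w. fold xk.
      replace (a + 3 * INR (S k) * h) with (xk + 3 * h) by (unfold xk; rewrite S_INR; ring).
      set (wk := rk3gl2_w f a h (y a) k) in *.
      replace (rk3gl2_block f xk h wk - y (xk + 3 * h)) with
        ((rk3gl2_block f xk h wk - rk3gl2_block f xk h (y xk)) + (rk3gl2_block f xk h (y xk) - y (xk + 3 * h))) by ring.
      eapply Rle_trans; [apply Rabs_triang|].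
      pose proof (block_stab xk h wk (y xk) Hxk ltac:(lra) Hxk3) as S1.
      pose proof (Hloc xk h Hxk ltac:(lra) Hxk3) as S2.
      assert (Hq : 1 <= 1 + Kb * h) by nra.
      assert (Hpk : 1 <= (1 + Kb * h) ^ k) by (apply pow_R1_Rle; lra).
      assert (Hh5 : 0 <= Cl * h ^ 5) by (apply Rmult_le_pos; auto; apply pow_le; lra).
      assert (S3 : (1 + Kb * h) * Rabs (wk - y xk) <= (1 + Kb * h) * (INR k * (1 + Kb * h) ^ k * Cl * h ^ 5))
        by (apply Rmult_le_compat_l; lra).
      rewrite S_INR. simpl pow at 1.
      assert (0 <= INR k * (1 + Kb * h) ^ k * Cl * h ^ 5) by (repeat apply Rmult_le_pos; try lra; try (apply pow_le; lra); try nra).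
      assert (Cl * h ^ 5 <= (1 + Kb * h) * (1 + Kb * h) ^ k * Cl * h ^ 5).
      { replace (Cl * h ^ 5) with (1 * (Cl * h ^ 5)) at 1 by ring.
        replace ((1 + Kb * h) * (1 + Kb * h) ^ k * Cl * h ^ 5) with (((1 + Kb * h) * (1 + Kb * h) ^ k) * (Cl * h ^ 5)) by ring.
        apply Rmult_le_compat_r; auto. nra. }
      nra. }
  specialize (Ind N (le_n N)).
  replace (a + 3 * INR N * h) with b in Ind by lra.
  eapply Rle_trans; [exact Ind|].
  assert (E : INR N * h = (b - a) / 3) by lra.
  assert (PE : (1 + Kb * h) ^ N <= exp (Kb * ((b - a) / 3))).
  { rewrite <- E. replace (Kb * (INR N * h)) with (INR N * (Kb * h)) by ring. apply pow_exp. nra. }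
  replace (INR N * (1 + Kb * h) ^ N * Cl * h ^ 5) with ((1 + Kb * h) ^ N * (Cl * (INR N * h) * h ^ 4)) by ring.
  rewrite E.
  replace (exp (Kb * ((b - a) / 3)) * Cl * ((b - a) / 3) * h ^ 4) with
    (exp (Kb * ((b - a) / 3)) * (Cl * ((b - a) / 3) * h ^ 4)) by ring.
  apply Rmult_le_compat_r; auto.
  apply Rmult_le_pos; [apply Rmult_le_pos; lra| apply pow_le; lra].
Qed.

End E.
Theorem mainTheorem2 (f : R -> R -> R) (a b : R) (y : R -> R) :
  a < b ->
  smooth4_bounded a b f ->
  (forall x, a <= x <= b -> is_derive y x (f x (y x))) ->
  exists C h0 : R, 0 < h0 /\
    forall N : nat, (0 < N)%nat ->
      let h := (b - a) / (3 * INR N) in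
      h <= h0 ->
      Rabs (rk3gl2_w f a h (y a) N - y b) <= C * h ^ 4.
Proof.
  intros Hab [D [HD0 [Hder [_ [M Hbnd]]]]] Hy.
  destruct (global a b M f y D Hab HD0 Hder Hbnd Hy) as [C HC].
  exists C, 1. split; [lra|]. intros N HN h _. apply HC; auto.
Qed.
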